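(* For $x>0$ and $v>0$, the function \[ \int_1^v\frac{e^{2\pi itx}}{t}(\log t+2\gamma)\,dt-\Big[\tfrac12\log^2\tfrac1x+\Big(\gamma-\log2\pi+\frac{i\pi}{2}\Big)\log\tfrac1x+\varepsilon_0(x,v)\Big] \] is independent of $v$ and, as a function of $x$, belongs to $\mathcal F$, where \[ \varepsilon_0(x,v)=-\int_v^\infty\frac{e^{2\pi itx}}{t}(\log t+2\gamma)\,dt. \]
   Context: $\gamma$ is Euler's constant. $\mathcal F$ is the set of continuous functions $f:\,]0,\infty[\to\mathbb C$ such that both $f(x)$ and $x\overline{f(1/x)}$ extend continuously to $x=0$. The integral defining $\varepsilon_0$ is an improper (conditionally convergent) integral. *)

(* Defs.v *)
From Stdlib Require Import Reals.
From Coquelicot Require Import Coquelicot.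
Open Scope R_scope.

Definition euler_gamma : R :=
  real (Lim_seq (fun n => sum_f_R0 (fun k => / INR (S k)) n - ln (INR (S n)))).

Definition cRInt (f : R -> C) (a b : R) : C :=
  (RInt (fun t => Re (f t)) a b, RInt (fun t => Im (f t)) a b).

Definition cexpi (theta : R) : C := (cos theta, sin theta).

Definition integrand (x t : R) : C :=
  Cmult (cexpi (2 * PI * t * x)) (RtoC ((ln t + 2 * euler_gamma) / t)).

(* The class F: continuous f on ]0,oo[ such that f(x) and x * conj(f(1/x))
   both extend continuously to x = 0 (i.e. have limits as x -> 0+). *)
Definition in_F (f : R -> C) : Prop :=
  (forall x : R, 0 < x -> continuous f x) /\
  (exists a : C, filterlim f (at_right 0) (locally a)) /\
  (exists b : C, filterlim (fun x => Cmult (RtoC x) (Cconj (f (/ x))))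
                           (at_right 0) (locally b)).

(* Main.v *)
Require Import Defs.
From Stdlib Require Import Reals Lra Psatz Lia Factorial.
From Coquelicot Require Import Coquelicot.
Open Scope R_scope.

Ltac factR := rewrite ?INR_IZR_INZ; repeat match goal with |- context [Z.of_nat (fact ?n)] =>
   let v := eval vm_compute in (Z.of_nat (fact n)) in change (Z.of_nat (fact n)) with v end.
Lemma cos_ub_eq a : cos_ub a = 1 - a^2/2 + a^4/24 - a^6/720 + a^8/40320.
Proof. unfold cos_ub, cos_approx, cos_term. cbn [sum_f_R0 Nat.mul Nat.add]. factR. simpl pow. field. Qed.
Lemma sin_ub_eq a : sin_ub a = a - a^3/6 + a^5/120 - a^7/5040 + a^9/362880.
Proof. unfold sin_ub, sin_approx, sin_term. cbn [sum_f_R0 Nat.mul Nat.add]. factR. simpl pow. field. Qed.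
Lemma cos_lb_eq a : cos_lb a = 1 - a^2/2 + a^4/24 - a^6/720.
Proof. unfold cos_lb, cos_approx, cos_term. cbn [sum_f_R0 Nat.mul Nat.add]. factR. simpl pow. field. Qed.
Lemma sin_lb_eq a : sin_lb a = a - a^3/6 + a^5/120 - a^7/5040.
Proof. unfold sin_lb, sin_approx, sin_term. cbn [sum_f_R0 Nat.mul Nat.add]. factR. simpl pow. field. Qed.

Lemma PI_bounds : 3 <= PI <= 4.
Proof. split. generalize PI2_3_2; lra. apply PI_4. Qed.

Lemma sin_le_id s : 0 <= s -> sin s <= s.
Proof.
  intros Hs. destruct (Rle_or_lt s PI) as [H|H].
  - destruct (SIN s Hs H) as [_ U]. rewrite sin_ub_eq in U.
    generalize PI_bounds; intros.
    assert (s2 : s * s <= 16) by nra.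
    assert (0 <= s^3) by (apply pow_le; lra).
    assert (P : - s^3/6 + s^5/120 - s^7/5040 + s^9/362880 <= 0).
    { replace (- s^3/6 + s^5/120 - s^7/5040 + s^9/362880) with
        (s^3 * (-1/6 + (s*s)/120 - (s*s)*(s*s)/5040 + (s*s)*(s*s)*(s*s)/362880)) by field.
      assert (0 <= s*s) by nra.
      set (q := s*s) in *.
      assert (q*q <= 256) by nra.
      assert (0 <= q*q) by nra.
      assert (q*q*q <= 4096) by nra.
      assert (-1/6 + q/120 - q*q/5040 + q*q*q/362880 <= 0) by lra.
      nra. }
    lra.
  - generalize (SIN_bound s) PI_bounds. lra.
Qed.

Lemma sin_ge s : 0 <= s <= PI -> s - s^3/6 <= sin s.
Proof.
  intros [H1 H2]. destruct (SIN s H1 H2) as [L _]. rewrite sin_lb_eq in L.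
  generalize PI_bounds; intros.
  assert (s*s <= 16) by nra.
  assert (0 <= s^5) by (apply pow_le; lra).
  replace (s^7) with (s^5 * (s*s)) in L by ring.
  assert (s^5 * (s*s) / 5040 <= s^5/120) by nra.
  lra.
Qed.

Lemma cos_ge s : 0 <= s <= PI / 2 -> 1 - s^2/2 <= cos s.
Proof.
  intros [H1 H2]. generalize PI_bounds; intros.
  destruct (COS s ltac:(lra) H2) as [L _]. rewrite cos_lb_eq in L.
  assert (s*s <= 4) by nra.
  assert (0 <= s^4) by (apply pow_le; lra).
  replace (s^6) with (s^4 * (s*s)) in L by ring.
  assert (s^4 * (s*s) / 720 <= s^4/24) by nra.
  lra.
Qed.

Lemma cos_le s : 0 <= s <= PI / 2 -> cos s <= 1 - s^2/2 + s^4/24.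
Proof.
  intros [H1 H2]. generalize PI_bounds; intros.
  destruct (COS s ltac:(lra) H2) as [_ U]. rewrite cos_ub_eq in U.
  assert (s*s <= 4) by nra.
  assert (0 <= s^6) by (apply pow_le; lra).
  replace (s^8) with (s^6 * (s*s)) in U by ring.
  assert (s^6 * (s*s) / 40320 <= s^6/720) by nra.
  lra.
Qed.

Lemma sin_nonneg s : 0 <= s <= PI -> 0 <= sin s.
Proof. intros [H1 H2]. apply sin_ge_0; auto. Qed.

Lemma cauchy_R {T} (F : (T -> Prop) -> Prop) {FF : ProperFilter F} (f : T -> R) :
  (forall eps : posreal, exists P, F P /\ forall u v, P u -> P v -> Rabs (f u - f v) < eps) ->
  exists l, filterlim f F (locally l).
Proof.
  intros H. apply (proj1 (filterlim_locally_closely (U:=R_CompleteSpace) f)).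
  intros P [eps HP]. destruct (H eps) as [Q [FQ HQ]].
  exists Q Q; auto. intros u v Qu Qv. apply HP. simpl.
  apply HQ; auto.
Qed.

Lemma lim_le_bound {T} (F : (T -> Prop) -> Prop) {FF : ProperFilter F} (f e : T -> R) l c e0 :
  filterlim f F (locally l) -> filterlim e F (locally e0) ->
  F (fun u => Rabs (f u - c) <= e u) -> Rabs (l - c) <= e0.
Proof.
  intros Hf He HF.
  destruct (Rle_or_lt (Rabs (l - c)) e0) as [H|H]; auto. exfalso.
  set (d := (Rabs (l - c) - e0) / 2).
  assert (dpos : 0 < d) by (unfold d; lra).
  assert (H1 : F (fun u => Rabs (f u - l) < d)).
  { apply (Hf (fun y => Rabs (y - l) < d)). exists (mkposreal d dpos). intros y Hy. exact Hy. }
  assert (H2 : F (fun u => Rabs (e u - e0) < d)).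
  { apply (He (fun y => Rabs (y - e0) < d)). exists (mkposreal d dpos). intros y Hy. exact Hy. }
  destruct (filter_ex _ (filter_and _ _ HF (filter_and _ _ H1 H2))) as [u [A [B C]]].
  unfold d in *.
  assert (Rabs (l - c) <= Rabs (f u - l) + Rabs (f u - c)).
  { replace (l - c) with (-(f u - l) + (f u - c)) by ring.
    eapply Rle_trans; [apply Rabs_triang|]. rewrite Rabs_Ropp; lra. }
  assert (e u - e0 <= Rabs (e u - e0)) by apply Rle_abs. lra.
Qed.

Lemma C_lim_pair {T} (F : (T -> Prop) -> Prop) {FF : Filter F} (f g : T -> R) a b :
  filterlim f F (locally a) -> filterlim g F (locally b) ->
  filterlim (fun x => ((f x, g x) : C)) F (locally ((a, b) : C)).
Proof.
  intros Hf Hg P [eps HP].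
  assert (H1 : F (fun x => ball a eps (f x))).
  { apply (Hf (fun y => ball a eps y)). exists eps. auto. }
  assert (H2 : F (fun x => ball b eps (g x))).
  { apply (Hg (fun y => ball b eps y)). exists eps. auto. }
  unfold filtermap. generalize (filter_and _ _ H1 H2). apply filter_imp.
  intros x [A B]. apply HP. split; assumption.
Qed.

Lemma is_derive_cont (f : R -> R) (df : R) x : is_derive f x df -> continuous f x.
Proof. intros H. apply (ex_derive_continuous (V:=R_NormedModule)). exists df. exact H. Qed.

Lemma ex_RInt_cont (f : R -> R) a b : a <= b ->
  (forall t, a <= t <= b -> continuous f t) -> ex_RInt f a b.
Proof.
  intros Hab H. apply (ex_RInt_continuous (V:=R_CompleteNormedModule)). intros z Hz.
  rewrite Rmin_left in Hz by lra. rewrite Rmax_right in Hz by lra. auto.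
Qed.

Lemma parts (T dT h dh : R -> R) a b : a <= b ->
  (forall t, a <= t <= b -> is_derive T t (dT t) /\ is_derive h t (dh t) /\
     continuous dT t /\ continuous dh t) ->
  RInt (fun s => dT s * h s) a b = T b * h b - T a * h a - RInt (fun s => T s * dh s) a b.
Proof.
  intros Hab H.
  assert (E1 : ex_RInt (fun s => dT s * h s) a b).
  { apply ex_RInt_cont; auto. intros t Ht. destruct (H t Ht) as [A [B [C D]]].
    apply (continuous_mult dT h); auto. eapply is_derive_cont; eauto. }
  assert (E2 : ex_RInt (fun s => T s * dh s) a b).
  { apply ex_RInt_cont; auto. intros t Ht. destruct (H t Ht) as [A [B [C D]]].
    apply (continuous_mult T dh); auto. eapply is_derive_cont; eauto. }
  assert (I : is_RInt (fun s => dT s * h s + T s * dh s) a b (T b * h b - T a * h a)).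
  { apply (is_RInt_derive (fun s => T s * h s)).
    - intros x Hx. rewrite Rmin_left in Hx by lra. rewrite Rmax_right in Hx by lra.
      destruct (H x Hx) as [A [B _]].
      generalize (is_derive_mult T h x _ _ A B). intros K.
      assert (K' : is_derive (fun x0 => mult (T x0) (h x0)) x (plus (mult (dT x) (h x)) (mult (T x) (dh x)))).
      { apply K. intros; apply Rmult_comm. }
      exact K'.
    - intros x Hx. rewrite Rmin_left in Hx by lra. rewrite Rmax_right in Hx by lra.
      destruct (H x Hx) as [A [B [C D]]].
      apply (continuous_plus (fun s => dT s * h s) (fun s => T s * dh s)).
      + apply (continuous_mult dT h); auto. eapply is_derive_cont; eauto.
      + apply (continuous_mult T dh); auto. eapply is_derive_cont; eauto. }
  apply (is_RInt_unique (V:=R_CompleteNormedModule)) in I.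
  rewrite (RInt_plus (fun s => dT s * h s) (fun s => T s * dh s)) in I; auto.
  simpl in I. unfold plus in I; simpl in I. lra.
Qed.

Lemma osc_tail (T dT h dh : R -> R) u0 :
  (forall t, u0 <= t -> is_derive T t (dT t) /\ is_derive h t (dh t) /\
     continuous dT t /\ continuous dh t /\ Rabs (T t) <= 1 /\ dh t <= 0 /\ 0 <= h t) ->
  forall u w, u0 <= u -> u <= w -> Rabs (RInt (fun s => dT s * h s) u w) <= 2 * h u.
Proof.
  intros H u w Hu Huw.
  rewrite (parts T dT h dh u w Huw).
  2:{ intros t Ht. destruct (H t ltac:(lra)) as [A [B [C [D _]]]]. auto. }
  assert (E2 : ex_RInt (fun s => T s * dh s) u w).
  { apply ex_RInt_cont; auto. intros t Ht. destruct (H t ltac:(lra)) as [A [B [C [D _]]]].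
    apply (continuous_mult T dh); auto. eapply is_derive_cont; eauto. }
  assert (E3 : ex_RInt (fun s => - dh s) u w).
  { apply ex_RInt_cont; auto. intros t Ht. destruct (H t ltac:(lra)) as [A [B [C [D _]]]].
    apply (continuous_opp dh); auto. }
  assert (B1 : Rabs (RInt (fun s => T s * dh s) u w) <= RInt (fun s => - dh s) u w).
  { eapply Rle_trans. apply abs_RInt_le; auto.
    apply RInt_le; auto.
    - apply ex_RInt_norm in E2. exact E2.
    - intros x Hx. destruct (H x ltac:(lra)) as [A [B [C [D [F [G K]]]]]].
      rewrite Rabs_mult. rewrite (Rabs_left1 (dh x)) by auto.
      assert (0 <= - dh x) by lra. nra. }
  assert (B2 : RInt (fun s => - dh s) u w = h u - h w).
  { replace (h u - h w) with (minus (- h w) (- h u)) by (unfold minus, plus, opp; simpl; ring).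
    apply (is_RInt_unique (V:=R_CompleteNormedModule)).
    apply (is_RInt_derive (fun s => - h s) (fun s => - dh s)).
    - intros x Hx. rewrite Rmin_left in Hx by lra. rewrite Rmax_right in Hx by lra.
      destruct (H x ltac:(lra)) as [A [B _]]. apply (is_derive_opp h); auto.
    - intros x Hx. rewrite Rmin_left in Hx by lra. rewrite Rmax_right in Hx by lra.
      destruct (H x ltac:(lra)) as [A [B [C [D _]]]]. apply (continuous_opp dh); auto. }
  destruct (H u ltac:(lra)) as [_ [_ [_ [_ [Tu [_ hu]]]]]].
  destruct (H w ltac:(lra)) as [_ [_ [_ [_ [Tw [_ hw]]]]]].
  rewrite B2 in B1.
  assert (Rabs (T w * h w) <= h w). { rewrite Rabs_mult, (Rabs_pos_eq (h w)) by auto. nra. }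
  assert (Rabs (T u * h u) <= h u). { rewrite Rabs_mult, (Rabs_pos_eq (h u)) by auto. nra. }
  eapply Rle_trans. apply Rabs_triang.
  eapply Rle_trans. apply Rplus_le_compat_r. unfold Rminus. apply Rabs_triang.
  rewrite !Rabs_Ropp. lra.
Qed.

Lemma improper_inf (f bnd : R -> R) u0 :
  (forall t, u0 <= t -> continuous f t) ->
  (forall u w, u0 <= u -> u <= w -> Rabs (RInt f u w) <= bnd u) ->
  filterlim bnd (Rbar_locally p_infty) (locally 0) ->
  exists l, filterlim (fun w => RInt f u0 w) (Rbar_locally p_infty) (locally l) /\
    (forall u, u0 <= u -> Rabs (l - RInt f u0 u) <= bnd u).
Proof.
  intros Hc Hb Hl.
  assert (Ch : forall u v, u0 <= u -> u <= v -> RInt f u0 v = RInt f u0 u + RInt f u v).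
  { intros u v H1 H2. symmetry. apply (RInt_Chasles (V:=R_CompleteNormedModule));
    apply ex_RInt_cont; auto; intros; apply Hc; lra. }
  destruct (cauchy_R (Rbar_locally p_infty) (fun w => RInt f u0 w)) as [l Hlim].
  { intros eps.
    destruct (Hl (fun y => Rabs (y - 0) < eps)) as [M HM].
    { exists eps. intros y Hy. exact Hy. }
    exists (fun w => Rmax M u0 < w). split.
    { exists (Rmax M u0). auto. }
    intros u v Hu Hv.
    generalize (Rmax_l M u0) (Rmax_r M u0); intros.
    destruct (Rle_or_lt u v) as [Huv|Huv].
    - rewrite (Ch u v) by lra.
      replace (RInt f u0 u - (RInt f u0 u + RInt f u v)) with (- RInt f u v) by ring.
      rewrite Rabs_Ropp. eapply Rle_lt_trans. apply Hb; lra.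
      specialize (HM u ltac:(lra)). simpl in HM. rewrite Rminus_0_r in HM.
      eapply Rle_lt_trans. apply Rle_abs. exact HM.
    - rewrite (Ch v u) by lra.
      replace (RInt f u0 v + RInt f v u - RInt f u0 v) with (0 + RInt f v u) by ring.
      rewrite Rplus_0_l.
      eapply Rle_lt_trans. apply Hb; lra.
      specialize (HM v ltac:(lra)). simpl in HM. rewrite Rminus_0_r in HM.
      eapply Rle_lt_trans. apply Rle_abs. exact HM. }
  exists l. split; auto.
  intros u Hu.
  apply (lim_le_bound (Rbar_locally p_infty) (fun w => RInt f u0 w) (fun _ => bnd u) l _ (bnd u) Hlim).
  - apply filterlim_const.
  - exists u. intros w Hw. rewrite (Ch u w) by lra.
    replace (RInt f u0 u + RInt f u w - RInt f u0 u) with (0 + RInt f u w) by ring.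
    rewrite Rplus_0_l.
    apply Hb; lra.
Qed.

Definition fc (s : R) := cos s / s.
Definition fs (s : R) := sin s / s.
Definition fcl (s : R) := cos s * ln s / s.
Definition fsl (s : R) := sin s * ln s / s.

Lemma ln3 : 1 <= ln 3.
Proof.
  rewrite <- ln_exp at 1. apply ln_le. apply exp_pos. apply exp_le_3.
Qed.

Lemma lim_inv_inf : filterlim (fun u => 2 * / u) (Rbar_locally p_infty) (locally 0).
Proof.
  replace 0 with (2 * 0) by ring.
  apply (is_lim_scal_l (fun u => / u) 2 p_infty 0).
  replace (Finite 0) with (Rbar_inv p_infty) by reflexivity.
  apply is_lim_inv. apply is_lim_id. discriminate.
Qed.

Lemma lim_lninv_inf : filterlim (fun u => 2 * (ln u / u)) (Rbar_locally p_infty) (locally 0).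
Proof.
  replace 0 with (2 * 0) by ring.
  apply (is_lim_scal_l (fun u => ln u / u) 2 p_infty 0).
  apply is_lim_div_ln_p.
Qed.

Ltac side := repeat split; try (apply Rgt_not_eq || apply Rlt_not_eq); try lra; try nra.
Ltac cont := apply (ex_derive_continuous (V:=R_NormedModule)); auto_derive; side.

Lemma h1_props (T dT : R -> R) :
  (forall t, is_derive T t (dT t) /\ continuous dT t /\ Rabs (T t) <= 1) ->
  forall t, 3 <= t -> is_derive T t (dT t) /\ is_derive (fun s => / s) t (- / t ^ 2) /\
     continuous dT t /\ continuous (fun s => - / s ^ 2) t /\ Rabs (T t) <= 1 /\
     - / t ^ 2 <= 0 /\ 0 <= / t.
Proof.
  intros H t Ht. destruct (H t) as [A [B C]].
  assert (D1 : is_derive (fun s => / s) t (- / t ^ 2)). { auto_derive. side. field. lra. }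
  assert (D2 : continuous (fun s => - / s ^ 2) t). { cont. }
  assert (0 < / t ^ 2) by (apply Rinv_0_lt_compat; apply pow_lt; lra).
  assert (0 < / t) by (apply Rinv_0_lt_compat; lra).
  split; [auto|split; [auto|split;[auto|split;[auto|split;[auto|split;lra]]]]].
Qed.

Lemma h2_props (T dT : R -> R) :
  (forall t, is_derive T t (dT t) /\ continuous dT t /\ Rabs (T t) <= 1) ->
  forall t, 3 <= t -> is_derive T t (dT t) /\ is_derive (fun s => ln s / s) t ((1 - ln t) / t ^ 2) /\
     continuous dT t /\ continuous (fun s => (1 - ln s) / s ^ 2) t /\ Rabs (T t) <= 1 /\
     (1 - ln t) / t ^ 2 <= 0 /\ 0 <= ln t / t.
Proof.
  intros H t Ht. destruct (H t) as [A [B C]].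
  assert (L : 1 <= ln t). { eapply Rle_trans. apply ln3. apply ln_le; lra. }
  assert (D1 : is_derive (fun s => ln s / s) t ((1 - ln t) / t ^ 2)). { auto_derive. side. field. lra. }
  assert (D2 : continuous (fun s => (1 - ln s) / s ^ 2) t). { cont. }
  assert (E1 : (1 - ln t) / t ^ 2 <= 0).
  { unfold Rdiv. assert (0 < / t ^ 2) by (apply Rinv_0_lt_compat; apply pow_lt; lra). nra. }
  assert (E2 : 0 <= ln t / t).
  { unfold Rdiv. assert (0 < / t) by (apply Rinv_0_lt_compat; lra). nra. }
  split; [auto|split; [auto|split;[auto|split;[auto|split;[auto|split;auto]]]]].
Qed.

Lemma sin_T : forall t, is_derive sin t (cos t) /\ continuous cos t /\ Rabs (sin t) <= 1.
Proof.
  intros t. split; [|split].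
  - auto_derive; auto. ring.
  - cont.
  - apply Rabs_le. apply SIN_bound.
Qed.

Lemma cos_T : forall t, is_derive (fun s => - cos s) t (sin t) /\ continuous sin t /\ Rabs (- cos t) <= 1.
Proof.
  intros t. split; [|split].
  - auto_derive; auto. ring.
  - cont.
  - rewrite Rabs_Ropp. apply Rabs_le. apply COS_bound.
Qed.

Lemma cont_pos (F : R -> R) : (forall t, 0 < t -> ex_derive F t) -> forall t, 0 < t -> continuous F t.
Proof. intros H t Ht. apply (ex_derive_continuous (V:=R_NormedModule)). auto. Qed.

Lemma fc_cont t : 0 < t -> continuous fc t.
Proof. intros; unfold fc; cont. Qed.
Lemma fs_cont t : 0 < t -> continuous fs t.
Proof. intros; unfold fs; cont. Qed.
Lemma fcl_cont t : 0 < t -> continuous fcl t.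
Proof. intros; unfold fcl; cont. Qed.
Lemma fsl_cont t : 0 < t -> continuous fsl t.
Proof. intros; unfold fsl; cont. Qed.

Lemma fc_lim : exists l, filterlim (fun w => RInt fc 3 w) (Rbar_locally p_infty) (locally l) /\
    (forall u, 3 <= u -> Rabs (l - RInt fc 3 u) <= 2 * / u).
Proof.
  apply improper_inf.
  - intros; apply fc_cont; lra.
  - intros u w Hu Huw.
    rewrite (RInt_ext fc (fun s => cos s * / s)).
    + apply (osc_tail sin cos (fun s => / s) (fun s => - / s ^ 2) 3); auto.
      apply h1_props. apply sin_T.
    + intros; unfold fc; reflexivity.
  - apply lim_inv_inf.
Qed.

Lemma fs_lim : exists l, filterlim (fun w => RInt fs 3 w) (Rbar_locally p_infty) (locally l) /\
    (forall u, 3 <= u -> Rabs (l - RInt fs 3 u) <= 2 * / u).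
Proof.
  apply improper_inf.
  - intros; apply fs_cont; lra.
  - intros u w Hu Huw.
    rewrite (RInt_ext fs (fun s => sin s * / s)).
    + apply (osc_tail (fun s => - cos s) sin (fun s => / s) (fun s => - / s ^ 2) 3); auto.
      apply h1_props. apply cos_T.
    + intros; unfold fs; reflexivity.
  - apply lim_inv_inf.
Qed.

Lemma fcl_lim : exists l, filterlim (fun w => RInt fcl 3 w) (Rbar_locally p_infty) (locally l) /\
    (forall u, 3 <= u -> Rabs (l - RInt fcl 3 u) <= 2 * (ln u / u)).
Proof.
  apply improper_inf.
  - intros; apply fcl_cont; lra.
  - intros u w Hu Huw.
    rewrite (RInt_ext fcl (fun s => cos s * (ln s / s))).
    + apply (osc_tail sin cos (fun s => ln s / s) (fun s => (1 - ln s) / s ^ 2) 3); auto.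
      apply h2_props. apply sin_T.
    + intros; unfold fcl, Rdiv; apply Rmult_assoc.
  - apply lim_lninv_inf.
Qed.

Lemma fsl_lim : exists l, filterlim (fun w => RInt fsl 3 w) (Rbar_locally p_infty) (locally l) /\
    (forall u, 3 <= u -> Rabs (l - RInt fsl 3 u) <= 2 * (ln u / u)).
Proof.
  apply improper_inf.
  - intros; apply fsl_cont; lra.
  - intros u w Hu Huw.
    rewrite (RInt_ext fsl (fun s => sin s * (ln s / s))).
    + apply (osc_tail (fun s => - cos s) sin (fun s => ln s / s) (fun s => (1 - ln s) / s ^ 2) 3); auto.
      apply h2_props. apply cos_T.
    + intros; unfold fsl, Rdiv; apply Rmult_assoc.
  - apply lim_lninv_inf.
Qed.

Lemma int_bound (f g G : R -> R) b a :
  b <= a ->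
  (forall t, b <= t <= a -> continuous f t) ->
  (forall t, b <= t <= a -> Rabs (f t) <= g t) ->
  (forall t, b <= t <= a -> is_derive G t (g t) /\ continuous g t) ->
  Rabs (RInt f b a) <= G a - G b.
Proof.
  intros Hba Hc Hb Hd.
  assert (E1 : ex_RInt f b a) by (apply ex_RInt_cont; auto).
  assert (E2 : ex_RInt g b a) by (apply ex_RInt_cont; auto; intros; apply Hd; auto).
  assert (I : RInt g b a = G a - G b).
  { apply (is_RInt_unique (V:=R_CompleteNormedModule)).
    apply (is_RInt_derive G g).
    - intros x Hx. rewrite Rmin_left in Hx by lra. rewrite Rmax_right in Hx by lra. apply Hd; auto.
    - intros x Hx. rewrite Rmin_left in Hx by lra. rewrite Rmax_right in Hx by lra. apply Hd; auto. }
  rewrite <- I. eapply Rle_trans. apply abs_RInt_le; auto.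
  apply RInt_le; auto.
  - apply ex_RInt_norm in E1. exact E1.
  - intros; apply Hb; lra.
Qed.

Lemma near0 (f g G : R -> R) G0 :
  (forall t, 0 < t <= 1 -> continuous f t) ->
  (forall t, 0 < t <= 1 -> Rabs (f t) <= g t) ->
  (forall t, 0 < t <= 1 -> is_derive G t (g t) /\ continuous g t) ->
  filterlim G (at_right 0) (locally G0) ->
  exists L, filterlim (fun a => RInt f a 1) (at_right 0) (locally L) /\
    (forall a, 0 < a <= 1 -> Rabs (L - RInt f a 1) <= G a - G0).
Proof.
  intros Hc Hb Hd HG.
  assert (K : forall b a, 0 < b <= a -> a <= 1 -> Rabs (RInt f b 1 - RInt f a 1) <= G a - G b).
  { intros b a Hb1 Ha1.
    assert (Ch : RInt f b a + RInt f a 1 = RInt f b 1).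
    { apply (RInt_Chasles (V:=R_CompleteNormedModule));
      apply ex_RInt_cont; try lra; intros; apply Hc; lra. }
    rewrite <- Ch.
    replace (RInt f b a + RInt f a 1 - RInt f a 1) with (0 + RInt f b a) by ring.
    rewrite Rplus_0_l.
    apply (int_bound f g G); try lra; intros; try apply Hc; try apply Hb; try apply Hd; lra. }
  assert (Hpos : forall r, 0 < r -> at_right 0 (fun a => 0 < a <= r)).
  { intros r Hr. exists (mkposreal r Hr). intros y Hy Hy0. split; auto.
    cbn in Hy. unfold AbsRing_ball, abs, minus, plus, opp in Hy; simpl in Hy.
    rewrite Ropp_0, Rplus_0_r in Hy. apply Rabs_def2 in Hy. lra. }
  destruct (cauchy_R (at_right 0) (fun a => RInt f a 1)) as [L HL].
  { intros eps.
    assert (H1 : at_right 0 (fun a => Rabs (G a - G0) < eps / 2)).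
    { apply (HG (fun y => Rabs (y - G0) < eps / 2)).
      assert (0 < eps / 2) by (destruct eps; simpl; lra).
      exists (mkposreal _ H). intros y Hy. exact Hy. }
    exists (fun a => Rabs (G a - G0) < eps / 2 /\ 0 < a <= 1). split.
    { apply filter_and; auto. apply Hpos; lra. }
    intros u v [Hu1 Hu2] [Hv1 Hv2].
    destruct (Rle_or_lt u v) as [Huv|Huv].
    - generalize (K u v ltac:(lra) ltac:(lra)). intros.
      apply Rabs_def2 in Hu1. apply Rabs_def2 in Hv1.
      eapply Rle_lt_trans. apply H. lra.
    - generalize (K v u ltac:(lra) ltac:(lra)). intros.
      apply Rabs_def2 in Hu1. apply Rabs_def2 in Hv1.
      rewrite Rabs_minus_sym. eapply Rle_lt_trans. apply H. lra. }
  exists L. split; auto.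
  intros a Ha.
  apply (lim_le_bound (at_right 0) (fun b => RInt f b 1) (fun b => G a - G b) L _ (G a - G0) HL).
  - apply (filterlim_comp _ _ _ G (fun y => G a - y) _ (locally G0) _ HG).
    apply (ex_derive_continuous (V:=R_NormedModule) (fun y => G a - y)). auto_derive. auto.
  - generalize (Hpos a ltac:(lra)). apply filter_imp. intros b Hb0.
    apply K; lra.
Qed.

Section Lims.
Context {T : Type} (F : (T -> Prop) -> Prop) {FF : Filter F}.

Lemma lim_plus (f g : T -> R) a b : filterlim f F (locally a) -> filterlim g F (locally b) ->
  filterlim (fun x => f x + g x) F (locally (a + b)).
Proof.
  intros Hf Hg. apply (filterlim_comp_2 f g (fun u v => plus u v) Hf Hg).
  apply (filterlim_plus (K:=R_AbsRing) (V:=R_NormedModule) a b).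
Qed.

Lemma lim_mult (f g : T -> R) a b : filterlim f F (locally a) -> filterlim g F (locally b) ->
  filterlim (fun x => f x * g x) F (locally (a * b)).
Proof.
  intros Hf Hg. apply (filterlim_comp_2 f g (fun u v => mult u v) Hf Hg).
  apply (filterlim_mult (K:=R_AbsRing) a b).
Qed.

Lemma lim_opp (f : T -> R) a : filterlim f F (locally a) ->
  filterlim (fun x => - f x) F (locally (- a)).
Proof.
  intros Hf. apply (filterlim_comp _ _ _ f (fun u => opp u) _ _ _ Hf).
  apply (filterlim_opp (K:=R_AbsRing) (V:=R_NormedModule) a).
Qed.

Lemma lim_minus (f g : T -> R) a b : filterlim f F (locally a) -> filterlim g F (locally b) ->
  filterlim (fun x => f x - g x) F (locally (a - b)).
Proof. intros; apply lim_plus; auto. apply lim_opp; auto. Qed.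

Lemma lim_const (c : R) : filterlim (fun _ => c) F (locally c).
Proof. apply filterlim_const. Qed.

Lemma lim_ext (f g : T -> R) a : F (fun x => f x = g x) -> filterlim f F (locally a) -> filterlim g F (locally a).
Proof. intros H1 H2. apply (filterlim_ext_loc f g); auto. Qed.

Lemma lim_eq (f : T -> R) a b : a = b -> filterlim f F (locally a) -> filterlim f F (locally b).
Proof. intros ->; auto. Qed.

Lemma lim_squeeze0 (f g : T -> R) : F (fun x => Rabs (f x) <= g x) -> filterlim g F (locally 0) ->
  filterlim f F (locally 0).
Proof.
  intros Hb Hg P [eps HP].
  assert (H1 : F (fun x => Rabs (g x - 0) < eps)).
  { apply (Hg (fun y => Rabs (y - 0) < eps)). exists eps. intros y Hy; exact Hy. }
  unfold filtermap. generalize (filter_and _ _ Hb H1). apply filter_imp.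
  intros x [A B]. apply HP. cbn. unfold AbsRing_ball, abs, minus, plus, opp; simpl.
  rewrite Ropp_0, Rplus_0_r. rewrite Rminus_0_r in B.
  eapply Rle_lt_trans. apply A. eapply Rle_lt_trans. apply Rle_abs. auto.
Qed.

End Lims.

Lemma lim_cont (f : R -> R) {T} (F : (T -> Prop) -> Prop) {FF : Filter F} (h : T -> R) a :
  filterlim h F (locally a) -> continuous f a -> filterlim (fun x => f (h x)) F (locally (f a)).
Proof. intros H1 H2. apply (filterlim_comp _ _ _ h f _ _ _ H1 H2). Qed.

Lemma ln_le_sub1 y : 0 < y -> ln y <= y - 1.
Proof.
  intros Hy. generalize (exp_ineq1_le (ln y)). rewrite exp_ln by auto. lra.
Qed.

Lemma at_right_pos r : 0 < r -> at_right 0 (fun a => 0 < a <= r).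
Proof.
  intros Hr. exists (mkposreal r Hr). intros y Hy Hy0. split; auto.
  cbn in Hy. unfold AbsRing_ball, abs, minus, plus, opp in Hy; simpl in Hy.
  rewrite Ropp_0, Rplus_0_r in Hy. apply Rabs_def2 in Hy. lra.
Qed.

Lemma lim_xlnx : filterlim (fun s => s * ln s) (at_right 0) (locally 0).
Proof.
  assert (H : filterlim (fun s => ln (/ s) / (/ s)) (at_right 0) (locally 0)).
  { apply (filterlim_comp _ _ _ Rinv (fun y => ln y / y) _ (Rbar_locally p_infty)).
    apply filterlim_Rinv_0_right. apply is_lim_div_ln_p. }
  apply lim_opp in H. rewrite Ropp_0 in H.
  apply (lim_ext _ (fun s => - (ln (/ s) / (/ s)))); [|exact H].
  generalize (at_right_pos 1 ltac:(lra)). apply filter_imp.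
  intros s [Hs _]. rewrite ln_Rinv by auto. field. lra.
Qed.

Lemma lim_id0 : filterlim (fun s => s) (at_right 0) (locally 0).
Proof.
  intros P [eps HP]. exists eps. intros y Hy _. apply HP. auto.
Qed.

Definition qc (s : R) := (cos s - 1) / s.
Definition pc (s : R) := (cos s - 1) * ln s / s.

Lemma cos1_bound s : 0 < s <= 1 -> Rabs (cos s - 1) <= s^2 / 2.
Proof.
  intros Hs. generalize PI_bounds; intros.
  generalize (cos_ge s ltac:(lra)) (COS_bound s). intros.
  rewrite Rabs_left1 by lra. lra.
Qed.

Lemma abs_div_le x s c : 0 < s -> Rabs x <= c * s -> Rabs (x / s) <= c.
Proof.
  intros Hs H. unfold Rdiv. rewrite Rabs_mult, Rabs_inv, (Rabs_pos_eq s) by lra.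
  apply (Rmult_le_reg_r s); auto. rewrite Rmult_assoc, Rinv_l by lra. lra.
Qed.

Lemma xlnx_bound s : 0 < s <= 1 -> Rabs (s * ln s) <= 1.
Proof.
  intros Hs. assert (L : ln s <= 0) by (rewrite <- ln_1; apply ln_le; lra).
  generalize (ln_le_sub1 (/ s) ltac:(apply Rinv_0_lt_compat; lra)). rewrite ln_Rinv by lra.
  intros K. rewrite Rabs_mult, Rabs_pos_eq, Rabs_left1 by lra.
  assert (s * (- ln s) <= s * (/ s - 1)) by (apply Rmult_le_compat_l; lra).
  rewrite Rmult_minus_distr_l, Rinv_r in H by lra. lra.
Qed.

Lemma qc_bound s : 0 < s <= 1 -> Rabs (qc s) <= 1.
Proof.
  intros Hs. unfold qc. apply abs_div_le; try lra.
  eapply Rle_trans. apply cos1_bound; auto. nra.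
Qed.

Lemma fs_bound s : 0 < s <= 1 -> Rabs (fs s) <= 1.
Proof.
  intros Hs. unfold fs. apply abs_div_le; try lra.
  generalize (sin_le_id s ltac:(lra)) (sin_nonneg s ltac:(generalize PI_bounds; lra)). intros.
  rewrite Rabs_pos_eq; lra.
Qed.

Lemma pc_bound s : 0 < s <= 1 -> Rabs (pc s) <= 1.
Proof.
  intros Hs. unfold pc. apply abs_div_le; try lra.
  rewrite Rabs_mult. generalize (cos1_bound s Hs) (xlnx_bound s Hs). intros A B.
  rewrite Rabs_mult, (Rabs_pos_eq s) in B by lra.
  assert (Rabs (cos s - 1) * Rabs (ln s) <= s^2/2 * Rabs (ln s)).
  { apply Rmult_le_compat_r; auto. apply Rabs_pos. }
  assert (s^2/2 * Rabs (ln s) = s/2 * (s * Rabs (ln s))) by (simpl; field).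
  assert (0 <= Rabs (ln s)) by apply Rabs_pos.
  assert (s/2 * (s * Rabs (ln s)) <= s/2 * 1) by (apply Rmult_le_compat_l; lra).
  lra.
Qed.

Lemma fsl_bound s : 0 < s <= 1 -> Rabs (fsl s) <= - ln s.
Proof.
  intros Hs. unfold fsl. apply abs_div_le; try lra.
  assert (L : ln s <= 0) by (rewrite <- ln_1; apply ln_le; lra).
  generalize (sin_le_id s ltac:(lra)) (sin_nonneg s ltac:(generalize PI_bounds; lra)). intros.
  rewrite Rabs_mult, Rabs_pos_eq, Rabs_left1 by lra. nra.
Qed.

Lemma qc_cont t : 0 < t -> continuous qc t.
Proof. intros; unfold qc; cont. Qed.
Lemma pc_cont t : 0 < t -> continuous pc t.
Proof. intros; unfold pc; cont. Qed.

Lemma const_G : forall t : R, 0 < t <= 1 -> is_derive (fun s => s) t 1 /\ continuous (fun _ => 1) t.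
Proof. intros t Ht. split. auto_derive; auto. apply continuous_const. Qed.

Lemma lim_qc : exists L, filterlim (fun a => RInt qc a 1) (at_right 0) (locally L) /\
    (forall a, 0 < a <= 1 -> Rabs (L - RInt qc a 1) <= a).
Proof.
  assert (P1 : forall t, 0 < t <= 1 -> continuous qc t) by (intros; apply qc_cont; lra).
  destruct (near0 qc (fun _ => 1) (fun s => s) 0 P1 qc_bound const_G lim_id0) as [L [H1 H2]].
  exists L. split; auto. intros a Ha. specialize (H2 a Ha). simpl in H2. rewrite Rminus_0_r in H2. exact H2.
Qed.

Lemma lim_qs : exists L, filterlim (fun a => RInt fs a 1) (at_right 0) (locally L) /\
    (forall a, 0 < a <= 1 -> Rabs (L - RInt fs a 1) <= a).
Proof.
  assert (P1 : forall t, 0 < t <= 1 -> continuous fs t) by (intros; apply fs_cont; lra).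
  destruct (near0 fs (fun _ => 1) (fun s => s) 0 P1 fs_bound const_G lim_id0) as [L [H1 H2]].
  exists L. split; auto. intros a Ha. specialize (H2 a Ha). simpl in H2. rewrite Rminus_0_r in H2. exact H2.
Qed.

Lemma lim_pc : exists L, filterlim (fun a => RInt pc a 1) (at_right 0) (locally L).
Proof.
  assert (P1 : forall t, 0 < t <= 1 -> continuous pc t) by (intros; apply pc_cont; lra).
  destruct (near0 pc (fun _ => 1) (fun s => s) 0 P1 pc_bound const_G lim_id0) as [L [H1 H2]].
  exists L. auto.
Qed.

Lemma lim_ps : exists L, filterlim (fun a => RInt fsl a 1) (at_right 0) (locally L).
Proof.
  assert (P1 : forall t, 0 < t <= 1 -> continuous fsl t) by (intros; apply fsl_cont; lra).
  assert (P3 : forall t, 0 < t <= 1 -> is_derive (fun s => s - s * ln s) t (- ln t) /\ continuous (fun s => - ln s) t).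
  { intros t Ht. split. auto_derive. lra. field. lra. cont. }
  assert (P4 : filterlim (fun s => s - s * ln s) (at_right 0) (locally 0)).
  { apply (lim_eq _ _ (0 - 0)). apply Rminus_0_r. apply (lim_minus (at_right 0)). apply lim_id0. apply lim_xlnx. }
  destruct (near0 fsl (fun s => - ln s) (fun s => s - s * ln s) 0 P1 fsl_bound P3 P4) as [L [H1 H2]].
  exists L. auto.
Qed.

Fixpoint sumk (f : nat -> R) (n : nat) : R :=
  match n with O => 0 | S p => sumk f p + f (S p) end.

Lemma sumk_S f n : sumk f (S n) = sumk f n + f (S n).
Proof. reflexivity. Qed.

Lemma sumk_ext f g n : (forall k, (1 <= k <= n)%nat -> f k = g k) -> sumk f n = sumk g n.
Proof.
  induction n; intros H; simpl; auto.
  rewrite IHn, H; [reflexivity| lia | intros; apply H; lia].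
Qed.

Lemma sumk_derive (f df : nat -> R -> R) n u :
  (forall k, (1 <= k)%nat -> is_derive (f k) u (df k u)) ->
  is_derive (fun x => sumk (fun k => f k x) n) u (sumk (fun k => df k u) n).
Proof.
  intros H. induction n.
  - simpl. apply (is_derive_const (K:=R_AbsRing) (V:=R_NormedModule) 0).
  - simpl. apply (is_derive_plus (K:=R_AbsRing) (V:=R_NormedModule) (fun x => sumk (fun k => f k x) n) (f (S n))); auto.
    apply H; lia.
Qed.

Lemma sumk_cont (f : nat -> R -> R) n u :
  (forall k, (1 <= k)%nat -> continuous (f k) u) ->
  continuous (fun x => sumk (fun k => f k x) n) u.
Proof.
  intros H. induction n.
  - simpl. apply continuous_const.
  - simpl. apply (continuous_plus (fun x => sumk (fun k => f k x) n) (f (S n))); auto.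
    apply H; lia.
Qed.

Lemma sin_kPI k : sin (INR k * PI) = 0.
Proof.
  induction k. simpl. rewrite Rmult_0_l. apply sin_0.
  rewrite S_INR, Rmult_plus_distr_r, Rmult_1_l, neg_sin, IHk. ring.
Qed.

Lemma cos_kPI k : cos (INR k * PI) = (-1) ^ k.
Proof.
  induction k. simpl. rewrite Rmult_0_l. apply cos_0.
  rewrite S_INR, Rmult_plus_distr_r, Rmult_1_l, neg_cos, IHk. simpl. ring.
Qed.

Lemma kern_s n u :
  2 * sin (u / 2) * sumk (fun k => sin (INR k * u)) n = cos (u / 2) - cos ((INR n + / 2) * u).
Proof.
  induction n.
  - simpl. replace ((0 + / 2) * u) with (u / 2) by field. ring.
  - rewrite sumk_S, Rmult_plus_distr_l, IHn.
    replace ((INR (S n) + / 2) * u) with (INR (S n) * u + u / 2) by (rewrite S_INR; field).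
    replace ((INR n + / 2) * u) with (INR (S n) * u - u / 2) by (rewrite S_INR; field).
    rewrite cos_plus, cos_minus. ring.
Qed.

Lemma kern_c n u :
  2 * sin (u / 2) * (/ 2 + sumk (fun k => cos (INR k * u)) n) = sin ((INR n + / 2) * u).
Proof.
  induction n.
  - simpl. replace ((0 + / 2) * u) with (u / 2) by field. field.
  - rewrite sumk_S.
    replace (2 * sin (u / 2) * (/ 2 + (sumk (fun k => cos (INR k * u)) n + cos (INR (S n) * u))))
      with (2 * sin (u / 2) * (/ 2 + sumk (fun k => cos (INR k * u)) n) + 2 * sin (u/2) * cos (INR (S n) * u)) by ring.
    rewrite IHn.
    replace ((INR (S n) + / 2) * u) with (INR (S n) * u + u / 2) by (rewrite S_INR; field).
    replace ((INR n + / 2) * u) with (INR (S n) * u - u / 2) by (rewrite S_INR; field).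
    rewrite sin_plus, sin_minus. ring.
Qed.

Definition Hs n := sumk (fun k => / INR k) n.

Lemma alt_harm m :
  sumk (fun k => (1 - (-1) ^ k) / INR k) (2 * m) = 2 * Hs (2 * m) - Hs m.
Proof.
  unfold Hs. induction m.
  - simpl. ring.
  - replace (2 * S m)%nat with (S (S (2 * m))) by lia.
    rewrite !sumk_S, IHm.
    assert (E1 : (-1) ^ (2*m) = 1) by apply pow_1_even.
    change ((-1) ^ S (2 * m)) with (-1 * (-1) ^ (2 * m)).
    change ((-1) ^ S (S (2 * m))) with (-1 * (-1 * (-1) ^ (2 * m))).
    rewrite E1.
    replace (INR (S (S (2 * m)))) with (2 * INR (S m)) by (rewrite !S_INR, mult_INR; simpl; ring).
    replace (INR (S (2 * m))) with (2 * INR m + 1) by (rewrite S_INR, mult_INR; simpl; ring).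
    rewrite S_INR.
    assert (0 <= INR m) by apply pos_INR.
    field. lra.
Qed.

Lemma harm_sum n : sum_f_R0 (fun k => / INR (S k)) n = Hs (S n).
Proof.
  unfold Hs. induction n.
  - simpl. ring.
  - change (sum_f_R0 (fun k => / INR (S k)) (S n)) with (sum_f_R0 (fun k => / INR (S k)) n + / INR (S (S n))).
    rewrite IHn. reflexivity.
Qed.

Lemma Hs_ge n : ln (INR n + 1) <= Hs n.
Proof.
  induction n.
  - simpl. rewrite Rplus_0_l, ln_1. unfold Hs; simpl; lra.
  - unfold Hs in *. rewrite sumk_S. rewrite S_INR.
    assert (0 <= INR n) by apply pos_INR.
    assert (K : ln ((INR n + 1 + 1) / (INR n + 1)) <= (INR n + 1 + 1) / (INR n + 1) - 1)
      by (apply ln_le_sub1; apply Rdiv_lt_0_compat; lra).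
    rewrite ln_div in K by lra.
    replace ((INR n + 1 + 1) / (INR n + 1) - 1) with (/ (INR n + 1)) in K by (field; lra).
    lra.
Qed.

Lemma gamma_lim : is_lim_seq (fun n => Hs (S n) - ln (INR (S n))) euler_gamma.
Proof.
  set (u := fun n => sum_f_R0 (fun k => / INR (S k)) n - ln (INR (S n))).
  assert (Hu : forall n, u n = Hs (S n) - ln (INR (S n))).
  { intros; unfold u; rewrite harm_sum; auto. }
  assert (Ex : ex_finite_lim_seq u).
  { apply (ex_finite_lim_seq_decr u 0).
    - intros n. rewrite !Hu. unfold Hs. rewrite (sumk_S _ (S n)).
      rewrite (S_INR (S n)). assert (0 <= INR n) by apply pos_INR. rewrite S_INR.
      assert (K : ln ((INR n + 1) / (INR n + 1 + 1)) <= (INR n + 1) / (INR n + 1 + 1) - 1)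
        by (apply ln_le_sub1; apply Rdiv_lt_0_compat; lra).
      rewrite ln_div in K by lra.
      replace ((INR n + 1) / (INR n + 1 + 1) - 1) with (- / (INR n + 1 + 1)) in K by (field; lra).
      lra.
    - intros n. rewrite Hu. generalize (Hs_ge (S n)). intros K.
      assert (ln (INR (S n)) <= ln (INR (S n) + 1)).
      { apply ln_le. rewrite S_INR; generalize (pos_INR n); lra. lra. }
      lra. }
  destruct Ex as [l Hl].
  assert (E : euler_gamma = l).
  { unfold euler_gamma. fold u. rewrite (is_lim_seq_unique u l Hl). reflexivity. }
  rewrite E. apply (is_lim_seq_ext u); auto.
Qed.

Definition phi (u : R) := / (2 * sin (u / 2)) - / u.
Definition dphi (u : R) := - cos (u / 2) / (4 * sin (u / 2) ^ 2) + / u ^ 2.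

Lemma sin_half_bounds u : 0 < u <= PI ->
  u/2 - (u/2)^3/6 <= sin (u/2) <= u/2 /\ (u/2)/3 <= sin (u/2) /\ 0 < sin (u/2).
Proof.
  intros Hu. generalize PI_bounds; intros.
  assert (A := sin_ge (u/2) ltac:(lra)).
  assert (B := sin_le_id (u/2) ltac:(lra)).
  set (v := u/2) in *. assert (0 < v <= 2) by (unfold v; lra).
  assert (v^3/6 <= (2/3) * v) by (simpl; nra).
  split; [lra|split; lra].
Qed.

Lemma phi_bound u : 0 < u <= PI -> Rabs (phi u) <= / 2.
Proof.
  intros Hu. destruct (sin_half_bounds u Hu) as [[A B] [C D]].
  unfold phi. set (s := sin (u/2)) in *.
  replace (/ (2 * s) - / u) with ((u/2 - s) / (u * s)) by (field; lra).
  apply abs_div_le. nra.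
  set (v := u / 2) in *. replace u with (2 * v) by (unfold v; field).
  assert (0 < v) by (unfold v; lra). generalize PI_bounds; intros.
  assert (v <= 2) by (unfold v; lra).
  rewrite Rabs_pos_eq by lra.
  assert (v^3/6 <= v * (v/3)) by (simpl; nra).
  assert (v * (v/3) <= v * s) by (apply Rmult_le_compat_l; lra).
  lra.
Qed.

Lemma dphi_bound u : 0 < u <= PI -> Rabs (dphi u) <= 9 / 8.
Proof.
  intros Hu. destruct (sin_half_bounds u Hu) as [[A B] [C D]].
  generalize PI_bounds; intros.
  assert (Cg := cos_ge (u/2) ltac:(lra)).
  assert (Cl := cos_le (u/2) ltac:(lra)).
  unfold dphi. set (s := sin (u/2)) in *. set (c := cos (u/2)) in *.
  set (v := u / 2) in *. replace u with (2 * v) by (unfold v; field).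
  assert (0 < v) by (unfold v; lra). assert (v <= 2) by (unfold v; lra).
  replace (- c / (4 * s ^ 2) + / (2 * v) ^ 2) with ((s^2 - v^2 * c) / (4 * v^2 * s^2)) by (field; lra).
  apply abs_div_le. assert (0 < v^2) by nra. assert (0 < s^2) by nra. nra.
  assert (U : s^2 - v^2 * c <= v^4 / 2).
  { assert (s^2 <= v^2) by nra. assert (v^2 * (1 - v^2/2) <= v^2 * c) by (apply Rmult_le_compat_l; nra). nra. }
  assert (Lo : 0 <= s^2 - v^2 * c).
  { assert (0 <= v - v^3/6) by (simpl; nra).
    assert ((v - v^3/6)^2 <= s^2) by (apply pow_incr; lra).
    assert (v^2 * c <= v^2 * (1 - v^2/2 + v^4/24)) by (apply Rmult_le_compat_l; nra).
    assert (v^4/6 - v^6/72 >= 0).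
    { replace (v^4/6 - v^6/72) with (v^4 * (1/6 - v^2/72)) by field.
      assert (0 <= v^4) by (apply pow_le; lra). assert (v^2 <= 4) by nra. nra. }
    replace ((v - v^3/6)^2) with (v^2 - v^4/3 + v^6/36) in * by field.
    nra. }
  rewrite Rabs_pos_eq by lra.
  assert (v^2 / 9 <= s^2) by (replace (v^2/9) with ((v/3)^2) by field; apply pow_incr; lra).
  assert (v^4 / 2 <= 9/8 * (4 * v^2 * (v^2/9))) by (simpl; nra).
  assert (4 * v^2 * (v^2/9) <= 4 * v^2 * s^2) by (apply Rmult_le_compat_l; nra).
  nra.
Qed.

Lemma phi_deriv u : 0 < u <= PI -> is_derive phi u (dphi u) /\ continuous dphi u.
Proof.
  intros Hu. destruct (sin_half_bounds u Hu) as [_ [_ D]].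
  split.
  - unfold phi, dphi. auto_derive. side. unfold Rdiv in *. field. lra.
  - unfold dphi. cont.
Qed.

Lemma phi_cont u : 0 < u <= PI -> continuous phi u.
Proof.
  intros Hu. destruct (phi_deriv u Hu) as [A _]. eapply is_derive_cont; eauto.
Qed.

Lemma RL_gen (g G : R -> R) N eps : 0 < N -> 0 < eps <= PI ->
  (forall u, eps <= u <= PI -> is_derive G u (g u) /\ continuous g u /\ Rabs (G u) <= / N) ->
  Rabs (RInt (fun u => g u * phi u) eps PI) <= 6 / N.
Proof.
  intros HN He H.
  rewrite (parts G g phi dphi eps PI) by (try lra; intros t Ht; destruct (H t Ht) as [A [B _]];
     destruct (phi_deriv t ltac:(lra)); auto).
  assert (Ex : ex_RInt (fun s => G s * dphi s) eps PI).
  { apply ex_RInt_cont; try lra. intros t Ht. destruct (H t Ht) as [A _].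
    apply (continuous_mult G dphi). eapply is_derive_cont; eauto. apply phi_deriv; lra. }
  assert (B1 : Rabs (RInt (fun s => G s * dphi s) eps PI) <= (PI - eps) * (/ N * (9/8))).
  { apply abs_RInt_le_const; auto. lra. intros t Ht. rewrite Rabs_mult.
    destruct (H t Ht) as [_ [_ K]]. generalize (dphi_bound t ltac:(lra)). intros.
    apply Rmult_le_compat; auto; apply Rabs_pos. }
  assert (B2 : Rabs (G PI * phi PI) <= / N * / 2).
  { rewrite Rabs_mult. destruct (H PI ltac:(lra)) as [_ [_ K]].
    apply Rmult_le_compat; auto; try apply Rabs_pos. apply phi_bound; lra. }
  assert (B3 : Rabs (G eps * phi eps) <= / N * / 2).
  { rewrite Rabs_mult. destruct (H eps ltac:(lra)) as [_ [_ K]].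
    apply Rmult_le_compat; auto; try apply Rabs_pos. apply phi_bound; lra. }
  generalize PI_bounds; intros.
  assert (0 < / N) by (apply Rinv_0_lt_compat; lra).
  assert ((PI - eps) * (/ N * (9/8)) <= 4 * (/ N * (9/8))) by (apply Rmult_le_compat_r; lra).
  replace (6 / N) with (6 * / N) by (unfold Rdiv; ring).
  eapply Rle_trans. apply Rabs_triang.
  eapply Rle_trans. apply Rplus_le_compat_r. unfold Rminus. apply Rabs_triang.
  rewrite !Rabs_Ropp. lra.
Qed.

Lemma RL_sin N eps : 0 < N -> 0 < eps <= PI ->
  Rabs (RInt (fun u => sin (N * u) * phi u) eps PI) <= 6 / N.
Proof.
  intros HN He. apply (RL_gen (fun u => sin (N * u)) (fun u => - cos (N * u) / N)); auto.
  intros u Hu. split; [|split].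
  - auto_derive; auto. field. lra.
  - cont.
  - unfold Rdiv. rewrite Rabs_mult, Rabs_Ropp, Rabs_inv, (Rabs_pos_eq N) by lra.
    assert (0 < / N) by (apply Rinv_0_lt_compat; lra).
    generalize (COS_bound (N * u)); intros. assert (Rabs (cos (N*u)) <= 1) by (apply Rabs_le; lra).
    nra.
Qed.

Lemma RL_cos N eps : 0 < N -> 0 < eps <= PI ->
  Rabs (RInt (fun u => cos (N * u) * phi u) eps PI) <= 6 / N.
Proof.
  intros HN He. apply (RL_gen (fun u => cos (N * u)) (fun u => sin (N * u) / N)); auto.
  intros u Hu. split; [|split].
  - auto_derive; auto. field. lra.
  - cont.
  - unfold Rdiv. rewrite Rabs_mult, Rabs_inv, (Rabs_pos_eq N) by lra.
    assert (0 < / N) by (apply Rinv_0_lt_compat; lra).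
    generalize (SIN_bound (N * u)); intros. assert (Rabs (sin (N*u)) <= 1) by (apply Rabs_le; lra).
    nra.
Qed.

Lemma sumk_bound (f : nat -> R) n c : (forall k, (1 <= k <= n)%nat -> Rabs (f k) <= c) ->
  Rabs (sumk f n) <= INR n * c.
Proof.
  induction n; intros H.
  - simpl. rewrite Rabs_R0. lra.
  - rewrite sumk_S, S_INR. eapply Rle_trans. apply Rabs_triang.
    assert (Rabs (sumk f n) <= INR n * c) by (apply IHn; intros; apply H; lia).
    assert (Rabs (f (S n)) <= c) by (apply H; lia). lra.
Qed.

Lemma sumk_zero n : sumk (fun _ => 0) n = 0.
Proof. induction n; simpl; auto. rewrite IHn; ring. Qed.

Lemma RInt_add (f g : R -> R) a b : ex_RInt f a b -> ex_RInt g a b ->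
  RInt (fun u => f u + g u) a b = RInt f a b + RInt g a b.
Proof. intros; apply (RInt_plus (V:=R_CompleteNormedModule)); auto. Qed.

Lemma RInt_sub (f g : R -> R) a b : ex_RInt f a b -> ex_RInt g a b ->
  RInt (fun u => f u - g u) a b = RInt f a b - RInt g a b.
Proof. intros; apply (RInt_minus (V:=R_CompleteNormedModule)); auto. Qed.

Lemma RInt_chasles3 (f : R -> R) a b c : 0 < a -> 0 < b -> 0 < c -> (forall t, 0 < t -> continuous f t) ->
  RInt f a c = RInt f a b + RInt f b c.
Proof.
  intros Ha Hb Hc Hf. symmetry. apply (RInt_Chasles (V:=R_CompleteNormedModule));
  apply (ex_RInt_continuous (V:=R_CompleteNormedModule)); intros z Hz; apply Hf;
  generalize (Rmin_glb_lt a b 0) (Rmin_glb_lt b c 0); intros;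
  [ assert (0 < Rmin a b) by (apply Rmin_glb_lt; auto) | assert (0 < Rmin b c) by (apply Rmin_glb_lt; auto)]; lra.
Qed.

Lemma ex_RInt_pos (f : R -> R) a b : 0 < a -> 0 < b -> (forall t, 0 < t -> continuous f t) -> ex_RInt f a b.
Proof.
  intros Ha Hb Hf. apply (ex_RInt_continuous (V:=R_CompleteNormedModule)). intros z Hz. apply Hf.
  assert (0 < Rmin a b) by (apply Rmin_glb_lt; auto). lra.
Qed.

Lemma RInt_scale (f : R -> R) N a b : 0 < N -> 0 < a -> 0 < b -> (forall t, 0 < t -> continuous f t) ->
  RInt (fun y => N * f (N * y)) a b = RInt f (N * a) (N * b).
Proof.
  intros HN Ha Hb Hf.
  generalize (RInt_comp_lin (V:=R_CompleteNormedModule) f N 0 a b). rewrite !Rplus_0_r. intros K.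
  rewrite <- K.
  - apply RInt_ext. intros; rewrite Rplus_0_r; reflexivity.
  - apply ex_RInt_pos; auto; nra.
Qed.

Lemma FTC (F f : R -> R) a b : a <= b -> (forall t, a <= t <= b -> is_derive F t (f t) /\ continuous f t) ->
  RInt f a b = F b - F a.
Proof.
  intros Hab H. apply (is_RInt_unique (V:=R_CompleteNormedModule)).
  apply (is_RInt_derive F f).
  - intros x Hx. rewrite Rmin_left in Hx by lra. rewrite Rmax_right in Hx by lra. apply H; auto.
  - intros x Hx. rewrite Rmin_left in Hx by lra. rewrite Rmax_right in Hx by lra. apply H; auto.
Qed.

Lemma INR_k_pos k : (1 <= k)%nat -> 0 < INR k.
Proof. intros; apply lt_0_INR; lia. Qed.

Section Imag.
Variable n : nat.
Hypothesis Hn : (1 <= n)%nat.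
Let N := INR n + / 2.
Let eps := / (N * N).

Lemma N_ge : 1 <= INR n /\ INR n <= N /\ 3/2 <= N.
Proof. unfold N. assert (1 <= INR n) by (apply (le_INR 1); lia). lra. Qed.

Lemma eps_props : 0 < eps /\ eps <= / N /\ N * eps = / N /\ eps <= 1 /\ eps <= PI /\ N * PI >= 3.
Proof.
  destruct N_ge as [A [B C]]. generalize PI_bounds; intros.
  unfold eps.
  assert (0 < / N) by (apply Rinv_0_lt_compat; lra).
  assert (/ N <= 1) by (rewrite <- Rinv_1; apply Rinv_le_contravar; lra).
  assert (E1 : / (N * N) = / N * / N) by (field; lra).
  rewrite E1. split; [nra|split;[|split;[|split;[|split]]]].
  - assert (/N * /N <= /N * 1) by (apply Rmult_le_compat_l; lra). lra.
  - field; lra.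
  - nra.
  - nra.
  - nra.
Qed.

Lemma imag_identity :
  PI / 2 - eps / 2 - sumk (fun k => sin (INR k * eps) / INR k) n =
  RInt fs (N * eps) 1 + RInt fs 1 3 + RInt fs 3 (N * PI) + RInt (fun u => sin (N * u) * phi u) eps PI.
Proof.
  destruct eps_props as [e0 [e1 [e2 [e3 [e4 e5]]]]]. destruct N_ge as [A [B C]].
  generalize PI_bounds; intros.
  set (Fc := fun u => u / 2 + sumk (fun k => sin (INR k * u) / INR k) n).
  set (fc' := fun u => / 2 + sumk (fun k => cos (INR k * u)) n).
  assert (I1 : RInt fc' eps PI = Fc PI - Fc eps).
  { apply FTC; try lra. intros t Ht. split.
    - unfold Fc, fc'. apply (is_derive_plus (K:=R_AbsRing) (V:=R_NormedModule) (fun u => u / 2)).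
      + auto_derive; auto. field.
      + apply (sumk_derive (fun k u => sin (INR k * u) / INR k) (fun k u => cos (INR k * u))).
        intros k Hk. generalize (INR_k_pos k Hk); intros. auto_derive. lra. field. lra.
    - unfold fc'. apply (continuous_plus (fun _ => / 2) (fun u => sumk (fun k => cos (INR k * u)) n)).
      apply continuous_const. apply sumk_cont. intros; cont. }
  assert (FcPI : Fc PI = PI / 2).
  { unfold Fc. rewrite (sumk_ext _ (fun _ => 0)). rewrite sumk_zero; ring.
    intros k _. rewrite sin_kPI. unfold Rdiv; ring. }
  assert (I2 : RInt fc' eps PI = RInt (fun u => N * fs (N * u) + sin (N * u) * phi u) eps PI).
  { apply RInt_ext. rewrite Rmin_left, Rmax_right by lra. intros u Hu.
    destruct (sin_half_bounds u ltac:(lra)) as [_ [_ S0]].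
    unfold fc', fs, phi. generalize (kern_c n u). fold N. intros K.
    apply (Rmult_eq_reg_l (2 * sin (u / 2))). rewrite K. field. side. side. }

  rewrite RInt_add in I2.
  2:{ apply ex_RInt_pos; try lra. intros; unfold fs; cont. }
  2:{ apply ex_RInt_cont; try lra. intros t Ht. apply (continuous_mult (fun u => sin (N * u)) phi).
      cont. apply phi_cont; lra. }
  rewrite RInt_scale in I2; try lra. 2: intros; apply fs_cont; auto.
  rewrite (RInt_chasles3 fs (N * eps) 1 (N * PI)) in I2; try lra; try (intros; apply fs_cont; auto).
  rewrite (RInt_chasles3 fs 1 3 (N * PI)) in I2; try lra; try (intros; apply fs_cont; auto).
  rewrite I1, FcPI in I2. unfold Fc in I2. lra.
Qed.

End Imag.

Lemma abs_sum5 a b c d e : Rabs (a + b - c - d - e) <= Rabs a + Rabs b + Rabs c + Rabs d + Rabs e.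
Proof. unfold Rabs; repeat destruct Rcase_abs; lra. Qed.

Lemma eq_of_small (d : R) (C : R) : (forall n, (1 <= n)%nat -> Rabs d <= C / INR n) -> d = 0.
Proof.
  intros H. destruct (Req_dec d 0) as [|Hd]; auto. exfalso.
  assert (Pd : 0 < Rabs d) by (apply Rabs_pos_lt; auto).
  assert (C0 : 0 <= C).
  { generalize (H 1%nat (le_n 1)). simpl. intros. assert (0 <= C / 1) by lra. lra. }
  destruct (INR_unbounded (C / Rabs d)) as [m Hm].
  assert (1 <= INR (S m)) by (rewrite S_INR; generalize (pos_INR m); lra).
  generalize (H (S m) ltac:(lia)). intros K.
  assert (C / Rabs d < INR (S m)) by (rewrite S_INR; lra).
  assert (C < INR (S m) * Rabs d).
  { apply (Rmult_lt_compat_r (Rabs d)) in H1; auto. unfold Rdiv in H1.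
    rewrite Rmult_assoc, Rinv_l in H1 by lra. lra. }
  assert (Rabs d * INR (S m) <= C).
  { apply (Rmult_le_compat_r (INR (S m))) in K; [|lra]. unfold Rdiv in K.
    rewrite Rmult_assoc, Rinv_l in K by lra. lra. }
  lra.
Qed.

Lemma imag_const Qs0 S3 :
  (forall a, 0 < a <= 1 -> Rabs (Qs0 - RInt fs a 1) <= a) ->
  (forall u, 3 <= u -> Rabs (S3 - RInt fs 3 u) <= 2 * / u) ->
  Qs0 + RInt fs 1 3 + S3 = PI / 2.
Proof.
  intros HQ HS.
  enough (Qs0 + RInt fs 1 3 + S3 - PI / 2 = 0) by lra.
  apply (eq_of_small _ 10). intros n Hn.
  generalize (imag_identity n Hn) (eps_props n Hn) (N_ge n Hn).
  set (N := INR n + / 2). set (eps := / (N * N)).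
  intros Id [e0 [e1 [e2 [e3 [e4 e5]]]]] [A [B C]].
  generalize PI_bounds; intros.
  assert (iN : 0 < / N) by (apply Rinv_0_lt_compat; lra).
  assert (iN1 : / N <= 1) by (rewrite <- Rinv_1; apply Rinv_le_contravar; lra).
  assert (T1 : Rabs (Qs0 - RInt fs (N * eps) 1) <= / N) by (rewrite e2 in *; apply HQ; lra).
  assert (T2 : Rabs (S3 - RInt fs 3 (N * PI)) <= / N).
  { eapply Rle_trans. apply HS. lra.
    assert (W : / (N * PI) <= / (N * 3)) by (apply Rinv_le_contravar; nra).
    rewrite (Rinv_mult N 3) in W. lra. }
  assert (T3 : Rabs (RInt (fun u => sin (N * u) * phi u) eps PI) <= 6 / N) by (apply RL_sin; lra).
  assert (T4 : Rabs (sumk (fun k => sin (INR k * eps) / INR k) n) <= INR n * eps).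
  { apply sumk_bound. intros k Hk.
    assert (Pk := INR_k_pos k ltac:(lia)).
    assert (INR k <= INR n) by (apply le_INR; lia).
    assert (INR k * eps <= / N) by (rewrite <- e2; apply Rmult_le_compat_r; lra).
    assert (0 < INR k * eps) by nra.
    generalize (sin_le_id (INR k * eps) ltac:(lra)) (sin_nonneg (INR k * eps) ltac:(lra)). intros.
    apply abs_div_le; auto. rewrite Rabs_pos_eq by lra. lra. }
  assert (INR n * eps <= / N) by (rewrite <- e2; apply Rmult_le_compat_r; lra).
  assert (Rabs (Qs0 + RInt fs 1 3 + S3 - PI / 2) <= 10 / N).
  { replace (Qs0 + RInt fs 1 3 + S3 - PI / 2) with
      ((Qs0 - RInt fs (N * eps) 1) + (S3 - RInt fs 3 (N * PI)) - RInt (fun u => sin (N * u) * phi u) eps PI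
        - eps / 2 - sumk (fun k => sin (INR k * eps) / INR k) n) by lra.
    set (a1 := Qs0 - RInt fs (N * eps) 1) in *.
    set (a2 := S3 - RInt fs 3 (N * PI)) in *.
    set (a3 := RInt (fun u => sin (N * u) * phi u) eps PI) in *.
    set (a4 := sumk (fun k => sin (INR k * eps) / INR k) n) in *.
    assert (Rabs (a1 + a2 - a3 - eps / 2 - a4) <= Rabs a1 + Rabs a2 + Rabs a3 + eps / 2 + Rabs a4).
    { generalize (abs_sum5 a1 a2 a3 (eps / 2) a4). rewrite (Rabs_pos_eq (eps / 2)) by lra. auto. }
    unfold Rdiv in *. lra. }
  assert (10 / N <= 10 / INR n).
  { unfold Rdiv. apply Rmult_le_compat_l. lra. apply Rinv_le_contravar; lra. }
  lra.
Qed.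

Ltac toR := match goal with |- ?a = ?b => change (@eq R a b) end.

Lemma sumk_minus f g n : sumk (fun k => f k - g k) n = sumk f n - sumk g n.
Proof. induction n; simpl; [ring|rewrite IHn; ring]. Qed.

Section Real.
Variable n : nat.
Hypothesis Hn : (1 <= n)%nat.
Let N := INR n + / 2.
Let eps := / (N * N).

Lemma real_identity :
  sumk (fun k => (cos (INR k * eps) - cos (INR k * PI)) / INR k) n =
  - ln (sin (eps / 2)) - (RInt qc (N * eps) 1 - ln (N * eps) + RInt fc 1 3 + RInt fc 3 (N * PI))
  - RInt (fun u => cos (N * u) * phi u) eps PI.
Proof.
  destruct (eps_props n Hn) as [e0 [e1 [e2 [e3 [e4 e5]]]]]. destruct (N_ge n Hn) as [A [B C]].
  fold N eps in e0, e1, e2, e3, e4, e5, B, C.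
  generalize PI_bounds; intros.
  assert (iN1 : / N <= 1) by (rewrite <- Rinv_1; apply Rinv_le_contravar; lra).
  assert (iN : 0 < / N) by (apply Rinv_0_lt_compat; lra).
  set (Fs := fun u => sumk (fun k => - cos (INR k * u) / INR k) n).
  set (fs' := fun u => sumk (fun k => sin (INR k * u)) n).
  assert (I1 : RInt fs' eps PI = Fs PI - Fs eps).
  { apply FTC; try lra. intros t Ht. split.
    - unfold Fs, fs'.
      apply (sumk_derive (fun k u => - cos (INR k * u) / INR k) (fun k u => sin (INR k * u))).
      intros k Hk. generalize (INR_k_pos k Hk); intros. auto_derive. lra. field. lra.
    - unfold fs'. apply sumk_cont. intros; cont. }
  assert (I1' : Fs PI - Fs eps = sumk (fun k => (cos (INR k * eps) - cos (INR k * PI)) / INR k) n).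
  { unfold Fs. rewrite <- sumk_minus. apply sumk_ext. intros k _. unfold Rdiv; ring. }
  assert (Sp : forall u, eps <= u <= PI -> 0 < sin (u / 2)).
  { intros u Hu. destruct (sin_half_bounds u ltac:(lra)) as [_ [_ S0]]. auto. }
  set (cot2 := fun u => cos (u / 2) / (2 * sin (u / 2))).
  assert (I2 : RInt fs' eps PI = RInt (fun u => (cot2 u - N * fc (N * u)) - cos (N * u) * phi u) eps PI).
  { apply RInt_ext. rewrite Rmin_left, Rmax_right by lra. intros u Hu.
    assert (S0 := Sp u ltac:(lra)).
    unfold fs', cot2, fc, phi. generalize (kern_s n u). fold N. intros K.
    apply (Rmult_eq_reg_l (2 * sin (u / 2))). rewrite K. field. side. side. }
  assert (Ccot : forall t, eps <= t <= PI -> continuous cot2 t).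
  { intros t Ht. assert (S0 := Sp t Ht). unfold cot2. cont. }
  rewrite RInt_sub in I2.
  2:{ apply ex_RInt_cont; try lra. intros t Ht.
      apply (continuous_minus cot2 (fun u => N * fc (N * u))). auto. unfold fc; cont. }
  2:{ apply ex_RInt_cont; try lra. intros t Ht. apply (continuous_mult (fun u => cos (N * u)) phi).
      cont. apply phi_cont; lra. }
  rewrite RInt_sub in I2.
  2:{ apply ex_RInt_cont; try lra. auto. }
  2:{ apply ex_RInt_pos; try lra. intros; unfold fc; cont. }
  assert (I3 : RInt cot2 eps PI = ln (sin (PI / 2)) - ln (sin (eps / 2))).
  { apply (FTC (fun u => ln (sin (u / 2)))); try lra. intros t Ht. assert (S0 := Sp t Ht). split.
    - auto_derive. auto. unfold cot2. unfold Rdiv in *. field. lra.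
    - auto. }
  rewrite sin_PI2, ln_1 in I3.
  rewrite RInt_scale in I2; try lra. 2: intros; apply fc_cont; auto.
  rewrite (RInt_chasles3 fc (N * eps) 1 (N * PI)) in I2; try lra; try (intros; apply fc_cont; auto).
  rewrite (RInt_chasles3 fc 1 3 (N * PI)) in I2; try lra; try (intros; apply fc_cont; auto).
  assert (I4 : RInt fc (N * eps) 1 = RInt qc (N * eps) 1 - ln (N * eps)).
  { rewrite (RInt_ext fc (fun s => qc s + / s)).
    - rewrite RInt_add.
      + assert (F1 : RInt Rinv (N * eps) 1 = ln 1 - ln (N * eps)).
        { apply FTC; try lra. intros t Ht. split. auto_derive. lra. ring. cont. }
        rewrite ln_1 in F1. toR. lra.
      + apply ex_RInt_pos; try lra. intros; apply qc_cont; auto.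
      + apply ex_RInt_pos; try lra. intros; cont.
    - rewrite Rmin_left, Rmax_right by lra. intros x Hx. unfold fc, qc. toR. field. lra. }
  rewrite I4, I3 in I2. rewrite <- I1'. rewrite <- I1. rewrite I2. ring.
Qed.
End Real.

Definition gseq j := Hs (S j) - ln (INR (S j)).

Lemma abs_sum8 a b c d e f g h :
  Rabs (a + b + c - d + e - 2 * f + g + h) <=
  Rabs a + Rabs b + Rabs c + Rabs d + Rabs e + 2 * Rabs f + Rabs g + Rabs h.
Proof. unfold Rabs; repeat destruct Rcase_abs; lra. Qed.

Lemma real_bound Qc0 C3 m :
  (forall a, 0 < a <= 1 -> Rabs (Qc0 - RInt qc a 1) <= a) ->
  (forall u, 3 <= u -> Rabs (C3 - RInt fc 3 u) <= 2 * / u) ->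
  Rabs (Qc0 + RInt fc 1 3 + C3 + euler_gamma) <=
    11 / (INR m + 1) + 2 * Rabs (gseq (2 * m + 1) - euler_gamma) + Rabs (gseq m - euler_gamma).
Proof.
  intros HQ HC.
  assert (Hn : (1 <= 2 * S m)%nat) by lia.
  generalize (real_identity _ Hn) (eps_props _ Hn) (N_ge _ Hn).
  set (N := INR (2 * S m) + / 2). set (eps := / (N * N)).
  intros Id [e0 [e1 [e2 [e3 [e4 e5]]]]] [A [B C]].
  generalize PI_bounds; intros.
  assert (iN : 0 < / N) by (apply Rinv_0_lt_compat; lra).
  assert (iN1 : / N <= 1) by (rewrite <- Rinv_1; apply Rinv_le_contravar; lra).
  assert (Em : INR (2 * S m) = 2 * INR m + 2) by (rewrite mult_INR, (S_INR m); change (INR 2) with (1+1); ring).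
  assert (Pm : 0 <= INR m) by apply pos_INR.
  assert (NN : N = 2 * INR m + 5 / 2) by (unfold N; rewrite Em; field).
  assert (T1 : Rabs (Qc0 - RInt qc (N * eps) 1) <= / N) by (rewrite e2 in *; apply HQ; lra).
  assert (T2 : Rabs (C3 - RInt fc 3 (N * PI)) <= / N).
  { eapply Rle_trans. apply HC. lra.
    assert (W : / (N * PI) <= / (N * 3)) by (apply Rinv_le_contravar; nra).
    rewrite (Rinv_mult N 3) in W. lra. }
  assert (T3 : Rabs (RInt (fun u => cos (N * u) * phi u) eps PI) <= 6 / N) by (apply RL_cos; lra).
  set (D1 := sumk (fun k => (1 - cos (INR k * eps)) / INR k) (2 * S m)).
  assert (T4 : Rabs D1 <= / N).
  { unfold D1. eapply Rle_trans. apply (sumk_bound _ _ (INR (2 * S m) * (eps * eps) / 2)).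
    - intros k Hk. assert (Pk := INR_k_pos k ltac:(lia)).
      assert (INR k <= INR (2 * S m)) by (apply le_INR; lia).
      assert (Ke : INR k * eps <= / N) by (rewrite <- e2; apply Rmult_le_compat_r; lra).
      assert (0 < INR k * eps) by nra.
      generalize (cos1_bound (INR k * eps) ltac:(lra)). intros K.
      apply abs_div_le; auto. rewrite Rabs_minus_sym.
      eapply Rle_trans. apply K.
      assert (EE : (INR k * eps) ^ 2 / 2 = INR k * (INR k * (eps * eps) / 2)) by (simpl; field).
      rewrite EE. rewrite Rmult_comm. apply Rmult_le_compat_r. lra.
      assert (0 <= eps * eps) by nra.
      apply Rmult_le_compat_r. lra. apply Rmult_le_compat_r; lra.
    - assert (INR (2 * S m) * eps <= / N) by (rewrite <- e2; apply Rmult_le_compat_r; lra).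
      assert (0 <= INR (2 * S m) * eps) by nra.
      replace (INR (2 * S m) * (INR (2 * S m) * (eps * eps) / 2)) with
        ((INR (2 * S m) * eps) * (INR (2 * S m) * eps) / 2) by field.
      assert ((INR (2 * S m) * eps) * (INR (2 * S m) * eps) <= / N * 1) by
        (apply Rmult_le_compat; lra).
      lra. }
  set (z := eps / 2).
  assert (Hz : 0 < z <= / N) by (unfold z; lra).
  assert (T5 : Rabs (ln z - ln (sin z)) <= / N).
  { generalize (sin_le_id z ltac:(lra)) (sin_ge z ltac:(lra)). intros U Lz.
    assert (z ^ 3 / 6 <= z / 2 * z) by (simpl; nra).
    assert (Sz : z / 3 <= sin z) by (simpl in *; nra).
    assert (0 <= ln z - ln (sin z)).
    { assert (ln (sin z) <= ln z) by (apply ln_le; lra). lra. }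
    rewrite Rabs_pos_eq by lra.
    assert (K : ln (z / sin z) <= z / sin z - 1) by (apply ln_le_sub1; apply Rdiv_lt_0_compat; lra).
    rewrite ln_div in K by lra.
    assert (z / sin z - 1 = (z - sin z) / sin z) by (field; lra).
    assert ((z - sin z) / sin z <= z) .
    { apply (Rmult_le_reg_r (sin z)). lra. unfold Rdiv. rewrite Rmult_assoc, Rinv_l by lra.
      assert (z * (z/3) <= z * sin z) by (apply Rmult_le_compat_l; lra). simpl in *. nra. }
    lra. }
  set (lg := ln (2 * N) - 2 * ln (INR (S (2 * m + 1))) + ln (INR (S m))).
  assert (T6 : Rabs lg <= / N).
  { assert (E1 : INR (S (2 * m + 1)) = 2 * INR m + 2) by (rewrite S_INR, plus_INR, mult_INR; simpl; ring).
    assert (E2 : INR (S m) = INR m + 1) by apply S_INR.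
    unfold lg. rewrite E1, E2.
    assert (lg' : ln (2 * N) - 2 * ln (2 * INR m + 2) + ln (INR m + 1) = ln ((4 * INR m + 5) / (4 * INR m + 4))).
    { rewrite ln_div by lra. replace (4 * INR m + 4) with ((2 * INR m + 2) * (2 * INR m + 2) / (INR m + 1)) by (field; lra).
      rewrite ln_div by nra. rewrite NN.
      replace (2 * (2 * INR m + 5 / 2)) with (4 * INR m + 5) by field.
      rewrite (ln_mult (2 * INR m + 2) (2 * INR m + 2)) by lra. ring. }
    rewrite lg'.
    assert (0 <= ln ((4 * INR m + 5) / (4 * INR m + 4))).
    { rewrite <- ln_1. apply ln_le. lra. apply (Rmult_le_reg_r (4 * INR m + 4)). lra.
      unfold Rdiv. rewrite Rmult_assoc, Rinv_l by lra. lra. }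
    rewrite Rabs_pos_eq by lra.
    eapply Rle_trans. apply ln_le_sub1. apply Rdiv_lt_0_compat; lra.
    replace ((4 * INR m + 5) / (4 * INR m + 4) - 1) with (/ (4 * INR m + 4)) by (field; lra).
    apply Rinv_le_contravar; lra. }
  assert (Sum1 : sumk (fun k => (cos (INR k * eps) - cos (INR k * PI)) / INR k) (2 * S m) =
     (2 * Hs (2 * S m) - Hs (S m)) - D1).
  { rewrite <- alt_harm. unfold D1. rewrite <- sumk_minus. apply sumk_ext. intros k Hk.
    rewrite cos_kPI. field. apply Rgt_not_eq. apply INR_k_pos. lia. }
  assert (G1 : Hs (2 * S m) = gseq (2 * m + 1) + ln (INR (S (2 * m + 1)))).
  { unfold gseq. replace (2 * S m)%nat with (S (2 * m + 1)) by lia. ring. }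
  assert (G2 : Hs (S m) = gseq m + ln (INR (S m))) by (unfold gseq; ring).
  assert (LN : ln (N * eps) = ln (2 * N) + ln z).
  { unfold z. rewrite <- ln_mult by lra. f_equal. field. }
  rewrite Sum1, G1, G2, LN in Id.
  assert (X : Qc0 + RInt fc 1 3 + C3 + euler_gamma =
    (Qc0 - RInt qc (N * eps) 1) + (C3 - RInt fc 3 (N * PI)) + (ln z - ln (sin z))
    - RInt (fun u => cos (N * u) * phi u) eps PI + D1
    - 2 * (gseq (2 * m + 1) - euler_gamma) + (gseq m - euler_gamma) + lg).
  { unfold lg. change (eps / 2) with z in Id. lra. }
  rewrite X. eapply Rle_trans. apply abs_sum8.
  assert (/ N <= / (INR m + 1)) by (apply Rinv_le_contravar; lra).
  unfold Rdiv in *. lra.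
Qed.

Lemma real_const Qc0 C3 :
  (forall a, 0 < a <= 1 -> Rabs (Qc0 - RInt qc a 1) <= a) ->
  (forall u, 3 <= u -> Rabs (C3 - RInt fc 3 u) <= 2 * / u) ->
  Qc0 + RInt fc 1 3 + C3 = - euler_gamma.
Proof.
  intros HQ HC.
  set (X := Qc0 + RInt fc 1 3 + C3 + euler_gamma).
  enough (X = 0) by (unfold X in *; lra).
  destruct (Req_dec X 0) as [|HX]; auto. exfalso.
  assert (PX : 0 < Rabs X) by (apply Rabs_pos_lt; auto).
  generalize gamma_lim. intros GL. apply is_lim_seq_spec in GL.
  assert (pe : 0 < Rabs X / 8) by lra.
  destruct (GL (mkposreal _ pe)) as [K HK]. simpl in HK.
  destruct (INR_unbounded (88 / Rabs X)) as [m0 Hm0].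
  set (m := (m0 + K)%nat).
  assert (Hm : INR m0 <= INR m) by (apply le_INR; unfold m; lia).
  generalize (real_bound Qc0 C3 m HQ HC). fold X. intros B.
  assert (B1 : Rabs (gseq (2 * m + 1) - euler_gamma) < Rabs X / 8) by (apply HK; unfold m; lia).
  assert (B2 : Rabs (gseq m - euler_gamma) < Rabs X / 8) by (apply HK; unfold m; lia).
  assert (B3 : 11 / (INR m + 1) < Rabs X / 8).
  { assert (0 <= INR m) by apply pos_INR.
    apply (Rmult_lt_reg_r (INR m + 1)). lra. unfold Rdiv. rewrite Rmult_assoc, Rinv_l by lra.
    apply (Rmult_lt_reg_r (/ Rabs X)). apply Rinv_0_lt_compat; lra.
    replace (Rabs X * / 8 * (INR m + 1) * / Rabs X) with ((INR m + 1) / 8) by (field; lra).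
    assert (88 / Rabs X = 11 * / Rabs X * 8) by (field; lra). lra. }
  lra.
Qed.

Lemma pinf_pos (M : R) : Rbar_locally p_infty (fun w => M < w).
Proof. exists M. auto. Qed.

Lemma lim_scale_inf a : 0 < a -> filterlim (fun w => a * w) (Rbar_locally p_infty) (Rbar_locally p_infty).
Proof.
  intros Ha P [M HM]. exists (M / a). intros x Hx. apply HM.
  apply (Rmult_lt_compat_l a) in Hx; auto. unfold Rdiv in Hx.
  rewrite <- Rmult_assoc, (Rmult_comm a M), Rmult_assoc, Rinv_r, Rmult_1_r in Hx; lra.
Qed.

Lemma sub_eq (Hf F : R -> R) a v w : 0 < a -> 0 < v -> 0 < w ->
  (forall t, 0 < t -> continuous F t) -> (forall t, 0 < t -> Hf t = a * F (a * t)) ->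
  RInt Hf v w = RInt F (a * v) (a * w).
Proof.
  intros Ha Hv Hw HF He.
  rewrite <- RInt_scale; auto.
  apply RInt_ext. intros x Hx. apply He.
  assert (0 < Rmin v w) by (apply Rmin_glb_lt; auto). lra.
Qed.

Lemma sub_lim (Hf F : R -> R) a v L : 0 < a -> 0 < v ->
  (forall t, 0 < t -> continuous F t) -> (forall t, 0 < t -> Hf t = a * F (a * t)) ->
  filterlim (fun W => RInt F 3 W) (Rbar_locally p_infty) (locally L) ->
  filterlim (fun w => RInt Hf v w) (Rbar_locally p_infty) (locally (RInt F (a * v) 3 + L)).
Proof.
  intros Ha Hv HF He HL.
  apply (lim_ext _ (fun w => RInt F (a * v) 3 + RInt F 3 (a * w))).
  - generalize (pinf_pos 0). apply filter_imp. intros w Hw.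
    rewrite (sub_eq Hf F a v w); auto.
    symmetry. apply RInt_chasles3; auto; nra.
  - apply (lim_plus _). apply (lim_const _).
    apply (filterlim_comp _ _ _ (fun w => a * w) (fun W => RInt F 3 W) _ (Rbar_locally p_infty)); auto.
    apply lim_scale_inf; auto.
Qed.

Lemma lin_lim (f1 f2 : R -> R) b L1 L2 :
  (forall t, 0 < t -> continuous f1 t) -> (forall t, 0 < t -> continuous f2 t) ->
  filterlim (fun W => RInt f1 3 W) (Rbar_locally p_infty) (locally L1) ->
  filterlim (fun W => RInt f2 3 W) (Rbar_locally p_infty) (locally L2) ->
  filterlim (fun W => RInt (fun s => f1 s + b * f2 s) 3 W) (Rbar_locally p_infty) (locally (L1 + b * L2)).
Proof.
  intros C1 C2 H1 H2.
  apply (lim_ext _ (fun W => RInt f1 3 W + b * RInt f2 3 W)).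
  - generalize (pinf_pos 0). apply filter_imp. intros w Hw.
    rewrite RInt_add.
    + f_equal. symmetry. apply (RInt_scal (V:=R_CompleteNormedModule)). apply ex_RInt_pos; auto; lra.
    + apply ex_RInt_pos; auto; lra.
    + apply ex_RInt_pos; auto; try lra. intros t Ht.
      apply (continuous_mult (fun _ => b) f2). apply continuous_const. auto.
  - apply (lim_plus _); auto. apply (lim_mult _); auto. apply (lim_const _).
Qed.

Lemma RInt_lin (f1 f2 : R -> R) b x y : 0 < x -> 0 < y ->
  (forall t, 0 < t -> continuous f1 t) -> (forall t, 0 < t -> continuous f2 t) ->
  RInt (fun s => f1 s + b * f2 s) x y = RInt f1 x y + b * RInt f2 x y.
Proof.
  intros Hx Hy C1 C2. rewrite RInt_add.
  + f_equal. apply (RInt_scal (V:=R_CompleteNormedModule)). apply ex_RInt_pos; auto.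
  + apply ex_RInt_pos; auto.
  + apply ex_RInt_pos; auto. intros t Ht.
    apply (continuous_mult (fun _ => b) f2). apply continuous_const. auto.
Qed.

Lemma cont_lower (F : R -> R) c : 0 < c -> (forall t, 0 < t -> continuous F t) ->
  continuous (fun y => RInt F y 3) c.
Proof.
  intros Hc HF. apply (continuous_RInt_2 F c 3 (fun y => RInt F y 3)).
  assert (P : 0 < c / 2) by lra.
  exists (mkposreal _ P). intros z Hz. apply (RInt_correct (V:=R_CompleteNormedModule)).
  apply ex_RInt_pos; auto; try lra.
  cbn in Hz. unfold AbsRing_ball, abs, minus, plus, opp in Hz; simpl in Hz.
  apply Rabs_def2 in Hz. lra.
Qed.

Section Main.
Variables C3 S3 CL3 SL3 : R.
Hypothesis HC3 : filterlim (fun w => RInt fc 3 w) (Rbar_locally p_infty) (locally C3).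
Hypothesis HS3 : filterlim (fun w => RInt fs 3 w) (Rbar_locally p_infty) (locally S3).
Hypothesis HCL3 : filterlim (fun w => RInt fcl 3 w) (Rbar_locally p_infty) (locally CL3).
Hypothesis HSL3 : filterlim (fun w => RInt fsl 3 w) (Rbar_locally p_infty) (locally SL3).

Definition Fr (b s : R) := fcl s + b * fc s.
Definition Fi (b s : R) := fsl s + b * fs s.

Lemma re_integrand x t : 0 < x -> 0 < t ->
  Re (integrand x t) = (2 * PI * x) * Fr (2 * euler_gamma - ln (2 * PI * x)) ((2 * PI * x) * t).
Proof.
  intros Hx Ht. assert (Hp : 0 < PI) by apply PI_RGT_0.
  assert (Ha : 0 < 2 * PI * x) by nra.
  unfold integrand, cexpi, Cmult, RtoC, Re, Fr, fcl, fc; simpl.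
  replace (2 * PI * t * x) with (2 * PI * x * t) by ring.
  rewrite ln_mult by nra. field. split; lra.
Qed.

Lemma im_integrand x t : 0 < x -> 0 < t ->
  Im (integrand x t) = (2 * PI * x) * Fi (2 * euler_gamma - ln (2 * PI * x)) ((2 * PI * x) * t).
Proof.
  intros Hx Ht. assert (Hp : 0 < PI) by apply PI_RGT_0.
  assert (Ha : 0 < 2 * PI * x) by nra.
  unfold integrand, cexpi, Cmult, RtoC, Im, Fi, fsl, fs; simpl.
  replace (2 * PI * t * x) with (2 * PI * x * t) by ring.
  rewrite ln_mult by nra. field. split; lra.
Qed.

Lemma Fr_cont b t : 0 < t -> continuous (Fr b) t.
Proof. intros; unfold Fr, fcl, fc; cont. Qed.
Lemma Fi_cont b t : 0 < t -> continuous (Fi b) t.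
Proof. intros; unfold Fi, fsl, fs; cont. Qed.

Lemma main_lim x v : 0 < x -> 0 < v ->
  let a := 2 * PI * x in let b := 2 * euler_gamma - ln a in
  filterlim (fun w => cRInt (integrand x) v w) (Rbar_locally p_infty)
    (locally ((RInt (Fr b) (a * v) 3 + (CL3 + b * C3), RInt (Fi b) (a * v) 3 + (SL3 + b * S3)) : C)).
Proof.
  intros Hx Hv a b. assert (Hp : 0 < PI) by apply PI_RGT_0.
  assert (Ha : 0 < a) by (unfold a; nra).
  unfold cRInt. apply (C_lim_pair _).
  - apply (sub_lim _ (Fr b) a v); auto.
    + intros; apply Fr_cont; auto.
    + intros t Ht. apply re_integrand; auto.
    + apply (lin_lim fcl fc b); auto. apply fcl_cont. apply fc_cont.
  - apply (sub_lim _ (Fi b) a v); auto.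
    + intros; apply Fi_cont; auto.
    + intros t Ht. apply im_integrand; auto.
    + apply (lin_lim fsl fs b); auto. apply fsl_cont. apply fs_cont.
Qed.

Definition lam := ln (2 * PI).

Definition g1 x :=
  let a := 2 * PI * x in let b := 2 * euler_gamma - ln a in let L := ln (/ x) in
  (RInt fcl a 3 + CL3) + b * (RInt fc a 3 + C3) - / 2 * L ^ 2 - (euler_gamma - lam) * L.
Definition g2 x :=
  let a := 2 * PI * x in let b := 2 * euler_gamma - ln a in let L := ln (/ x) in
  (RInt fsl a 3 + SL3) + b * (RInt fs a 3 + S3) - PI / 2 * L.

Lemma main_eq x v : 0 < x -> 0 < v ->
  let a := 2 * PI * x in let b := 2 * euler_gamma - ln a in
  ((g1 x, g2 x) : C) = Cminus (cRInt (integrand x) 1 v)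
                (Cplus (Cplus (RtoC (/ 2 * (ln (/ x)) ^ 2))
                              (Cmult (euler_gamma - ln (2 * PI), PI / 2) (RtoC (ln (/ x)))))
                       (Copp ((RInt (Fr b) (a * v) 3 + (CL3 + b * C3), RInt (Fi b) (a * v) 3 + (SL3 + b * S3)) : C))).
Proof.
  intros Hx Hv a b. assert (Hp : 0 < PI) by apply PI_RGT_0.
  assert (Ha : 0 < a) by (unfold a; nra).
  unfold cRInt.
  assert (S1 : RInt (fun t => Re (integrand x t)) 1 v = RInt (Fr b) (a * 1) (a * v)).
  { apply sub_eq; auto; try lra. intros; apply Fr_cont; auto. intros; apply re_integrand; auto. }
  assert (S2 : RInt (fun t => Im (integrand x t)) 1 v = RInt (Fi b) (a * 1) (a * v)).
  { apply sub_eq; auto; try lra. intros; apply Fi_cont; auto. intros; apply im_integrand; auto. }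
  rewrite S1, S2, Rmult_1_r.
  assert (E1 : RInt (Fr b) a (a * v) + RInt (Fr b) (a * v) 3 = RInt fcl a 3 + b * RInt fc a 3).
  { rewrite <- (RInt_chasles3 (Fr b) a (a * v) 3); try nra. 2: intros; apply Fr_cont; auto.
    unfold Fr. apply RInt_lin; try lra. apply fcl_cont. apply fc_cont. }
  assert (E2 : RInt (Fi b) a (a * v) + RInt (Fi b) (a * v) 3 = RInt fsl a 3 + b * RInt fs a 3).
  { rewrite <- (RInt_chasles3 (Fi b) a (a * v) 3); try nra. 2: intros; apply Fi_cont; auto.
    unfold Fi. apply RInt_lin; try lra. apply fsl_cont. apply fs_cont. }
  unfold g1, g2, Cminus, Cplus, Copp, Cmult, RtoC, lam. fold a b. simpl.
  f_equal; lra.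
Qed.
End Main.

Lemma cont_RInt_comp (F : R -> R) x : 0 < x -> (forall t, 0 < t -> continuous F t) ->
  continuous (fun y => RInt F (2 * PI * y) 3) x.
Proof.
  intros Hx HF. assert (Hp : 0 < PI) by apply PI_RGT_0.
  apply (continuous_comp (fun y => 2 * PI * y) (fun c => RInt F c 3)).
  - cont.
  - apply cont_lower; auto. nra.
Qed.

Lemma g1_cont C3 CL3 x : 0 < x -> continuous (g1 C3 CL3) x.
Proof.
  intros Hx. assert (Hp : 0 < PI) by apply PI_RGT_0.
  unfold g1, continuous. cbv zeta.
  apply (lim_minus (locally x)). apply (lim_minus (locally x)). apply (lim_plus (locally x)).
  - apply (lim_plus (locally x)). apply cont_RInt_comp; auto. apply fcl_cont. apply (lim_const _).
  - apply (lim_mult (locally x)).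
    + apply (ex_derive_continuous (V:=R_NormedModule) (fun y => 2 * euler_gamma - ln (2 * PI * y))).
      auto_derive. nra.
    + apply (lim_plus (locally x)). apply cont_RInt_comp; auto. apply fc_cont. apply (lim_const _).
  - apply (ex_derive_continuous (V:=R_NormedModule) (fun y => / 2 * ln (/ y) ^ 2)).
    auto_derive. side. apply Rinv_0_lt_compat; auto.
  - apply (ex_derive_continuous (V:=R_NormedModule) (fun y => (euler_gamma - lam) * ln (/ y))).
    auto_derive. side. apply Rinv_0_lt_compat; auto.
Qed.

Lemma g2_cont S3 SL3 x : 0 < x -> continuous (g2 S3 SL3) x.
Proof.
  intros Hx. assert (Hp : 0 < PI) by apply PI_RGT_0.
  unfold g2, continuous. cbv zeta.
  apply (lim_minus (locally x)). apply (lim_plus (locally x)).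
  - apply (lim_plus (locally x)). apply cont_RInt_comp; auto. apply fsl_cont. apply (lim_const _).
  - apply (lim_mult (locally x)).
    + apply (ex_derive_continuous (V:=R_NormedModule) (fun y => 2 * euler_gamma - ln (2 * PI * y))).
      auto_derive. nra.
    + apply (lim_plus (locally x)). apply cont_RInt_comp; auto. apply fs_cont. apply (lim_const _).
  - apply (ex_derive_continuous (V:=R_NormedModule) (fun y => PI / 2 * ln (/ y))).
    auto_derive. side. apply Rinv_0_lt_compat; auto.
Qed.

Lemma lim_a_right : filterlim (fun x => 2 * PI * x) (at_right 0) (at_right 0).
Proof.
  assert (Hp : 0 < PI) by apply PI_RGT_0.
  intros P [eps HP]. assert (q : 0 < eps / (2 * PI)) by (apply Rdiv_lt_0_compat; destruct eps; simpl; lra).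
  exists (mkposreal _ q). intros y Hy Hy0. unfold filtermap. apply HP; [|nra].
  cbn in *. unfold AbsRing_ball, abs, minus, plus, opp in *; simpl in *.
  rewrite Ropp_0, Rplus_0_r in *. rewrite Rabs_pos_eq in * by nra.
  apply (Rmult_lt_compat_l (2 * PI)) in Hy; [|lra].
  replace (2 * PI * (eps / (2 * PI))) with (pos eps) in Hy by (field; lra). lra.
Qed.

Lemma lim_a0 : filterlim (fun x => 2 * PI * x) (at_right 0) (locally 0).
Proof.
  apply (lim_eq _ _ (2 * PI * 0)). toR; ring.
  apply (lim_mult (at_right 0)). apply (lim_const _). apply lim_id0.
Qed.

Lemma lim_err Q0 (Q : R -> R) :
  (forall a, 0 < a <= 1 -> Rabs (Q0 - Q a) <= a) ->
  filterlim (fun x => (2 * euler_gamma - ln (2 * PI * x)) * (Q (2 * PI * x) - Q0)) (at_right 0) (locally 0).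
Proof.
  intros HQ. assert (Hp : 0 < PI) by apply PI_RGT_0.
  apply (lim_squeeze0 _ _ (fun x => Rabs (2 * euler_gamma) * (2 * PI * x) - (2 * PI * x) * ln (2 * PI * x))).
  - assert (q : 0 < / (2 * PI)) by (apply Rinv_0_lt_compat; lra).
    generalize (at_right_pos _ q). apply filter_imp. intros x [Hx Hx1].
    set (a := 2 * PI * x) in *.
    assert (Ha : 0 < a <= 1).
    { unfold a. split. nra. apply (Rmult_le_compat_l (2 * PI)) in Hx1; [|lra].
      rewrite Rinv_r in Hx1 by lra. lra. }
    assert (L : ln a <= 0) by (rewrite <- ln_1; apply ln_le; lra).
    generalize (HQ a Ha). rewrite Rabs_minus_sym. intros K.
    rewrite Rabs_mult.
    assert (Rabs (2 * euler_gamma - ln a) <= Rabs (2 * euler_gamma) - ln a).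
    { generalize (Rabs_triang (2 * euler_gamma) (- ln a)). rewrite Rabs_Ropp, (Rabs_left1 (ln a)) by lra. unfold Rminus. lra. }
    assert (0 <= Rabs (Q a - Q0)) by apply Rabs_pos.
    assert (Rabs (2 * euler_gamma - ln a) * Rabs (Q a - Q0) <= (Rabs (2 * euler_gamma) - ln a) * a).
    { apply Rmult_le_compat; auto. apply Rabs_pos. }
    lra.
  - apply (lim_eq _ _ (Rabs (2 * euler_gamma) * 0 - 0)). toR; ring.
    apply (lim_minus (at_right 0)).
    + apply (lim_mult (at_right 0)). apply (lim_const _). apply lim_a0.
    + apply (filterlim_comp _ _ _ (fun x => 2 * PI * x) (fun s => s * ln s) _ (at_right 0)).
      apply lim_a_right. apply lim_xlnx.
Qed.

Lemma lnx_split x : 0 < x -> ln (/ x) = lam - ln (2 * PI * x).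
Proof.
  intros Hx. assert (Hp : 0 < PI) by apply PI_RGT_0. unfold lam.
  rewrite ln_Rinv by auto. rewrite (ln_mult (2 * PI) x) by nra. ring.
Qed.

Lemma fc_split a : 0 < a -> RInt fc a 1 = RInt qc a 1 - ln a.
Proof.
  intros Ha.
  rewrite (RInt_ext fc (fun s => qc s + / s)).
  - rewrite RInt_add.
    + assert (F1 : RInt Rinv a 1 = ln 1 - ln a).
      { destruct (Rle_or_lt a 1).
        - apply FTC; try lra. intros t Ht. split. auto_derive. lra. ring. cont.
        - rewrite <- (opp_RInt_swap (V:=R_CompleteNormedModule)).
          rewrite (FTC ln Rinv 1 a); try lra. simpl. unfold opp; simpl. ring.
          intros t Ht. split. auto_derive. lra. ring. cont.
          apply ex_RInt_pos; try lra. intros; cont. }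
      rewrite ln_1 in F1. toR. lra.
    + apply ex_RInt_pos; try lra. intros; apply qc_cont; auto.
    + apply ex_RInt_pos; try lra. intros; cont.
  - intros x Hx. assert (0 < Rmin a 1) by (apply Rmin_glb_lt; lra). unfold fc, qc. toR. field. lra.
Qed.

Lemma fcl_split a : 0 < a -> RInt fcl a 1 = RInt pc a 1 - / 2 * ln a ^ 2.
Proof.
  intros Ha.
  rewrite (RInt_ext fcl (fun s => pc s + ln s / s)).
  - rewrite RInt_add.
    + assert (F1 : RInt (fun s => ln s / s) a 1 = / 2 * ln 1 ^ 2 - / 2 * ln a ^ 2).
      { destruct (Rle_or_lt a 1).
        - apply (FTC (fun s => / 2 * ln s ^ 2)); try lra. intros t Ht. split. auto_derive. lra. field. lra. cont.
        - rewrite <- (opp_RInt_swap (V:=R_CompleteNormedModule)).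
          rewrite (FTC (fun s => / 2 * ln s ^ 2) (fun s => ln s / s) 1 a); try lra. simpl. unfold opp; simpl. ring.
          intros t Ht. split. auto_derive. lra. field. lra. cont.
          apply ex_RInt_pos; try lra. intros; cont. }
      rewrite ln_1 in F1. toR. simpl in F1. lra.
    + apply ex_RInt_pos; try lra. intros; apply pc_cont; auto.
    + apply ex_RInt_pos; try lra. intros; cont.
  - intros x Hx. assert (0 < Rmin a 1) by (apply Rmin_glb_lt; lra). unfold fcl, pc. toR. field. lra.
Qed.

Lemma g1_lim0 C3 CL3 Qc0 Pc0 :
  Qc0 + RInt fc 1 3 + C3 = - euler_gamma ->
  (forall a, 0 < a <= 1 -> Rabs (Qc0 - RInt qc a 1) <= a) ->
  filterlim (fun a => RInt pc a 1) (at_right 0) (locally Pc0) ->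
  filterlim (g1 C3 CL3) (at_right 0)
    (locally (Pc0 + (RInt fcl 1 3 + CL3 - 2 * euler_gamma ^ 2 + / 2 * lam ^ 2 - euler_gamma * lam) + 0)).
Proof.
  intros Hr HQ HP. assert (Hp : 0 < PI) by apply PI_RGT_0.
  apply (lim_ext _ (fun x => RInt pc (2 * PI * x) 1 + (RInt fcl 1 3 + CL3 - 2 * euler_gamma ^ 2 + / 2 * lam ^ 2 - euler_gamma * lam)
     + (2 * euler_gamma - ln (2 * PI * x)) * (RInt qc (2 * PI * x) 1 - Qc0))).
  - generalize (at_right_pos 1 ltac:(lra)). apply filter_imp. intros x [Hx _].
    unfold g1. cbv zeta. assert (Ha : 0 < 2 * PI * x) by nra.
    rewrite (RInt_chasles3 fcl (2 * PI * x) 1 3) by (try lra; intros; apply fcl_cont; auto).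
    rewrite (RInt_chasles3 fc (2 * PI * x) 1 3) by (try lra; intros; apply fc_cont; auto).
    rewrite fcl_split, fc_split, lnx_split by auto.
    replace C3 with (- euler_gamma - Qc0 - RInt fc 1 3) by lra.
    field.
  - apply (lim_plus (at_right 0)). apply (lim_plus (at_right 0)).
    + apply (filterlim_comp _ _ _ (fun x => 2 * PI * x) (fun a => RInt pc a 1) _ (at_right 0)); auto.
      apply lim_a_right.
    + apply (lim_const _).
    + apply (lim_err Qc0 (fun a => RInt qc a 1)). auto.
Qed.

Lemma g2_lim0 S3 SL3 Qs0 Ps0 :
  Qs0 + RInt fs 1 3 + S3 = PI / 2 ->
  (forall a, 0 < a <= 1 -> Rabs (Qs0 - RInt fs a 1) <= a) ->
  filterlim (fun a => RInt fsl a 1) (at_right 0) (locally Ps0) ->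
  filterlim (g2 S3 SL3) (at_right 0)
    (locally (Ps0 + (RInt fsl 1 3 + SL3 + (2 * euler_gamma - lam) * (PI / 2)) + 0)).
Proof.
  intros Hr HQ HP. assert (Hp : 0 < PI) by apply PI_RGT_0.
  apply (lim_ext _ (fun x => RInt fsl (2 * PI * x) 1 + (RInt fsl 1 3 + SL3 + (2 * euler_gamma - lam) * (PI / 2))
     + (2 * euler_gamma - ln (2 * PI * x)) * (RInt fs (2 * PI * x) 1 - Qs0))).
  - generalize (at_right_pos 1 ltac:(lra)). apply filter_imp. intros x [Hx _].
    unfold g2. cbv zeta. assert (Ha : 0 < 2 * PI * x) by nra.
    rewrite (RInt_chasles3 fsl (2 * PI * x) 1 3) by (try lra; intros; apply fsl_cont; auto).
    rewrite (RInt_chasles3 fs (2 * PI * x) 1 3) by (try lra; intros; apply fs_cont; auto).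
    rewrite lnx_split by auto.
    replace S3 with (PI / 2 - Qs0 - RInt fs 1 3) by lra.
    toR. field.
  - apply (lim_plus (at_right 0)). apply (lim_plus (at_right 0)).
    + apply (filterlim_comp _ _ _ (fun x => 2 * PI * x) (fun a => RInt fsl a 1) _ (at_right 0)); auto.
      apply lim_a_right.
    + apply (lim_const _).
    + apply (lim_err Qs0 (fun a => RInt fs a 1)). auto.
Qed.

Lemma lim_lny : filterlim (fun y => ln y / y) (Rbar_locally p_infty) (locally 0).
Proof. apply is_lim_div_ln_p. Qed.

Lemma lim_invy (c : R) : filterlim (fun y => c * / y) (Rbar_locally p_infty) (locally 0).
Proof.
  apply (lim_eq _ _ (c * 0)). toR; ring. apply (lim_mult _). apply (lim_const _).
  apply (lim_eq _ _ (/2 * 0)). toR; ring.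
  apply (lim_ext _ (fun y => / 2 * (2 * / y))).
  - exists 0. intros y Hy. field. lra.
  - apply (lim_mult _). apply (lim_const _). apply lim_inv_inf.
Qed.

Lemma lim_ln2 : filterlim (fun y => ln y ^ 2 / y) (Rbar_locally p_infty) (locally 0).
Proof.
  assert (S : filterlim (fun y => ln (sqrt y) / sqrt y) (Rbar_locally p_infty) (locally 0)).
  { apply (filterlim_comp _ _ _ sqrt (fun z => ln z / z) _ (Rbar_locally p_infty)).
    apply filterlim_sqrt_p. apply lim_lny. }
  apply (lim_eq _ _ (4 * (0 * 0))). toR; ring.
  apply (lim_ext _ (fun y => 4 * ((ln (sqrt y) / sqrt y) * (ln (sqrt y) / sqrt y)))).
  - exists 0. intros y Hy.
    assert (Q : 0 < sqrt y) by (apply sqrt_lt_R0; lra).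
    assert (E : ln y = 2 * ln (sqrt y)).
    { rewrite <- (sqrt_sqrt y) at 1 by lra. rewrite ln_mult by lra. ring. }
    rewrite E. replace ((2 * ln (sqrt y)) ^ 2 / y) with ((2 * ln (sqrt y)) ^ 2 / (sqrt y * sqrt y)) by (rewrite sqrt_sqrt; lra). field. lra.
  - apply (lim_mult _). apply (lim_const _). apply (lim_mult _); auto.
Qed.

Section Inf.
Variables C3 S3 CL3 SL3 : R.
Hypothesis HC3b : forall u, 3 <= u -> Rabs (C3 - RInt fc 3 u) <= 2 * / u.
Hypothesis HS3b : forall u, 3 <= u -> Rabs (S3 - RInt fs 3 u) <= 2 * / u.
Hypothesis HCL3b : forall u, 3 <= u -> Rabs (CL3 - RInt fcl 3 u) <= 2 * (ln u / u).
Hypothesis HSL3b : forall u, 3 <= u -> Rabs (SL3 - RInt fsl 3 u) <= 2 * (ln u / u).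

Lemma tail_eq (F : R -> R) L a : 3 <= a -> (forall t, 0 < t -> continuous F t) ->
  RInt F a 3 + L = L - RInt F 3 a.
Proof.
  intros Ha HF. rewrite <- (opp_RInt_swap (V:=R_CompleteNormedModule)).
  unfold opp; simpl. ring. apply ex_RInt_pos; auto; lra.
Qed.

Lemma big_a : Rbar_locally p_infty (fun y => 0 < y /\ 3 <= 2 * PI * y).
Proof.
  assert (Hp : 0 < PI) by apply PI_RGT_0.
  exists (3 / (2 * PI)). intros y Hy. assert (0 < 3 / (2 * PI)) by (apply Rdiv_lt_0_compat; lra).
  split. lra. apply (Rmult_lt_compat_l (2 * PI)) in Hy; [|lra].
  replace (2 * PI * (3 / (2 * PI))) with 3 in Hy by (field; lra). lra.
Qed.

Lemma ln_le_id u : 0 < u -> ln u <= u.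
Proof. intros. generalize (ln_le_sub1 u H). lra. Qed.

Lemma T2_bound (Tl Tc : R) y :
  0 < y -> 3 <= 2 * PI * y ->
  Rabs Tl <= 2 * (ln (2 * PI * y) / (2 * PI * y)) -> Rabs Tc <= 2 * / (2 * PI * y) ->
  Rabs (/ y * (Tl + (2 * euler_gamma - ln (2 * PI * y)) * Tc)) <= (2 + Rabs (2 * euler_gamma) + 2) * / y.
Proof.
  intros Hy Ha H1 H2. set (a := 2 * PI * y) in *.
  assert (0 < a) by lra.
  assert (la : 0 <= ln a) by (rewrite <- ln_1; apply ln_le; lra).
  assert (lb : ln a <= a) by (apply ln_le_id; lra).
  assert (ia : 0 < / a) by (apply Rinv_0_lt_compat; lra).
  assert (iy : 0 < / y) by (apply Rinv_0_lt_compat; lra).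
  rewrite Rabs_mult, (Rabs_pos_eq (/ y)) by lra. rewrite Rmult_comm.
  apply Rmult_le_compat_r; [lra|].
  eapply Rle_trans. apply Rabs_triang. rewrite Rabs_mult.
  assert (Rabs Tl <= 2).
  { eapply Rle_trans; [apply H1|]. unfold Rdiv. assert (W : ln a * / a <= a * / a) by (apply Rmult_le_compat_r; lra).
    rewrite Rinv_r in W by lra. lra. }
  assert (Rabs (2 * euler_gamma - ln a) <= Rabs (2 * euler_gamma) + a).
  { generalize (Rabs_triang (2 * euler_gamma) (- ln a)). rewrite Rabs_Ropp, (Rabs_pos_eq (ln a)) by lra.
    unfold Rminus. lra. }
  assert (Rabs (2 * euler_gamma - ln a) * Rabs Tc <= (Rabs (2 * euler_gamma) + a) * (2 * / a)).
  { apply Rmult_le_compat; auto; apply Rabs_pos. }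
  assert ((Rabs (2 * euler_gamma) + a) * (2 * / a) = Rabs (2 * euler_gamma) * (2 * / a) + 2) by (field; lra).
  assert (2 * / a <= 1).
  { assert (/ a <= / 3) by (apply Rinv_le_contravar; lra). lra. }
  assert (Rabs (2 * euler_gamma) * (2 * / a) <= Rabs (2 * euler_gamma) * 1) by (apply Rmult_le_compat_l; [apply Rabs_pos|lra]).
  lra.
Qed.

Lemma g1_inf : filterlim (fun y => / y * g1 C3 CL3 y) (Rbar_locally p_infty) (locally 0).
Proof.
  assert (Hp : 0 < PI) by apply PI_RGT_0.
  apply (lim_ext _ (fun y => / y * ((RInt fcl (2 * PI * y) 3 + CL3) + (2 * euler_gamma - ln (2 * PI * y)) * (RInt fc (2 * PI * y) 3 + C3))
       - / 2 * (ln y ^ 2 / y) + (euler_gamma - lam) * (ln y / y))).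
  - generalize big_a. apply filter_imp. intros y [Hy Ha].
    unfold g1. cbv zeta. rewrite ln_Rinv by auto. toR. field. lra.
  - apply (lim_eq _ _ (0 - / 2 * 0 + (euler_gamma - lam) * 0)). toR; ring.
    apply (lim_plus _). apply (lim_minus _).
    + apply (lim_squeeze0 _ _ (fun y => (2 + Rabs (2 * euler_gamma) + 2) * / y)).
      * generalize big_a. apply filter_imp. intros y [Hy Ha].
        apply T2_bound; [exact Hy | exact Ha | |].
        -- rewrite (tail_eq fcl CL3); [apply HCL3b; auto | auto | apply fcl_cont].
        -- rewrite (tail_eq fc C3); [apply HC3b; auto | auto | apply fc_cont].
      * apply lim_invy.
    + apply (lim_mult _). apply (lim_const _). apply lim_ln2.
    + apply (lim_mult _). apply (lim_const _). apply lim_lny.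
Qed.

Lemma g2_inf : filterlim (fun y => / y * g2 S3 SL3 y) (Rbar_locally p_infty) (locally 0).
Proof.
  assert (Hp : 0 < PI) by apply PI_RGT_0.
  apply (lim_ext _ (fun y => / y * ((RInt fsl (2 * PI * y) 3 + SL3) + (2 * euler_gamma - ln (2 * PI * y)) * (RInt fs (2 * PI * y) 3 + S3))
       + PI / 2 * (ln y / y))).
  - generalize big_a. apply filter_imp. intros y [Hy Ha].
    unfold g2. cbv zeta. rewrite ln_Rinv by auto. toR. field. lra.
  - apply (lim_eq _ _ (0 + PI / 2 * 0)). toR; ring.
    apply (lim_plus _).
    + apply (lim_squeeze0 _ _ (fun y => (2 + Rabs (2 * euler_gamma) + 2) * / y)).
      * generalize big_a. apply filter_imp. intros y [Hy Ha].
        apply T2_bound; [exact Hy | exact Ha | |].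
        -- rewrite (tail_eq fsl SL3); [apply HSL3b; auto | auto | apply fsl_cont].
        -- rewrite (tail_eq fs S3); [apply HS3b; auto | auto | apply fs_cont].
      * apply lim_invy.
    + apply (lim_mult _). apply (lim_const _). apply lim_lny.
Qed.
End Inf.

Lemma inv_comp (h : R -> R) : filterlim (fun y => / y * h y) (Rbar_locally p_infty) (locally 0) ->
  filterlim (fun x => x * h (/ x)) (at_right 0) (locally 0).
Proof.
  intros H.
  apply (lim_ext _ (fun x => / (/ x) * h (/ x))).
  - generalize (at_right_pos 1 ltac:(lra)). apply filter_imp. intros x [Hx _].
    rewrite Rinv_inv. reflexivity.
  - apply (filterlim_comp _ _ _ Rinv (fun y => / y * h y) _ (Rbar_locally p_infty)); auto.
    apply filterlim_Rinv_0_right.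
Qed.

Theorem proposition10 :
  exists g : R -> C,
    in_F g /\
    forall x v : R, 0 < x -> 0 < v ->
      exists l : C,
        filterlim (fun w => cRInt (integrand x) v w) (Rbar_locally p_infty) (locally l) /\
        g x = Cminus (cRInt (integrand x) 1 v)
                (Cplus (Cplus (RtoC (/ 2 * (ln (/ x)) ^ 2))
                              (Cmult (euler_gamma - ln (2 * PI), PI / 2) (RtoC (ln (/ x)))))
                       (Copp l)).
Proof.
  destruct fc_lim as [C3 [HC3 HC3b]].
  destruct fs_lim as [S3 [HS3 HS3b]].
  destruct fcl_lim as [CL3 [HCL3 HCL3b]].
  destruct fsl_lim as [SL3 [HSL3 HSL3b]].
  destruct lim_qc as [Qc0 [HQc HQcb]].
  destruct lim_qs as [Qs0 [HQs HQsb]].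
  destruct lim_pc as [Pc0 HPc].
  destruct lim_ps as [Ps0 HPs].
  assert (Hreal := real_const Qc0 C3 HQcb HC3b).
  assert (Himag := imag_const Qs0 S3 HQsb HS3b).
  exists (fun x => (g1 C3 CL3 x, g2 S3 SL3 x) : C).
  split.
  - split; [|split].
    + intros x Hx. unfold continuous. apply (C_lim_pair (locally x)).
      apply g1_cont; auto. apply g2_cont; auto.
    + eexists. apply (C_lim_pair (at_right 0)).
      apply (g1_lim0 C3 CL3 Qc0 Pc0); auto.
      apply (g2_lim0 S3 SL3 Qs0 Ps0); auto.
    + exists ((0, 0) : C).
      apply (filterlim_ext (fun x => ((x * g1 C3 CL3 (/ x) - 0 * - g2 S3 SL3 (/ x)),
                                      (x * - g2 S3 SL3 (/ x) + 0 * g1 C3 CL3 (/ x))) : C)).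
      { intros x. reflexivity. }
      apply (C_lim_pair (at_right 0)).
      * apply (lim_ext _ (fun x => x * g1 C3 CL3 (/ x))).
        { exists (mkposreal 1 ltac:(lra)). intros; toR; ring. }
        apply inv_comp. apply g1_inf; auto.
      * apply (lim_ext _ (fun x => - (x * g2 S3 SL3 (/ x)))).
        { exists (mkposreal 1 ltac:(lra)). intros; toR; ring. }
        apply (lim_eq _ _ (- 0)). toR; ring. apply (lim_opp _).
        apply inv_comp. apply g2_inf; auto.
  - intros x v Hx Hv.
    eexists. split.
    + apply (main_lim C3 S3 CL3 SL3 HC3 HS3 HCL3 HSL3 x v Hx Hv).
    + apply (main_eq C3 S3 CL3 SL3 x v Hx Hv).
Qed.
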